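(* If a quasi-equation with countably many premises in the language of $\mathcal{V}_{\sigma\ell\mathbb{G}}$ (respectively $\mathcal{V}_{\sigma\ell\mathbb{G}_u}$, $\mathcal{V}_{\sigma\mathbb{RS}}$, $\mathcal{V}_{\sigma\mathbb{RS}_u}$) holds in $\mathbb{R}$ (with its standard operations, $\bigvee^-(g,f_1,f_2,\dots)=\sup_{n\ge1}\{f_n\wedge g\}$, and $1$ the real number $1$), then it holds in every object of $\mathcal{V}_{\sigma\ell\mathbb{G}}$ (respectively $\mathcal{V}_{\sigma\ell\mathbb{G}_u}$, $\mathcal{V}_{\sigma\mathbb{RS}}$, $\mathcal{V}_{\sigma\mathbb{RS}_u}$). In particular each of these is generated by $\mathbb{R}$ as a quasi-variety.
   Context: A quasi-equation with countably many premises is an expression $[\tau_1=\rho_1,\tau_2=\rho_2,\dots]\Rightarrow\tau=\rho$ with terms $\tau,\rho,\tau_n,\rho_n$; it holds in $A$ if under every assignment, all premises holding implies the conclusion holds. Axioms (A1)–(A3): (A1) $\bigvee_{n\ge1}^g f_n=\bigvee_{n\ge1}^g(f_n\wedge g)$; (A2) $\bigvee_{n\ge1}^g f_n=(f_1\wedge g)\vee\bigvee^-(g,f_2,f_3,\dots)$; (A3) $\bigvee_{n\ge1}^g(f_n\wedge h)\le h$, where $\bigvee_{n\ge1}^g f_n:=\bigvee^-(g,f_1,f_2,\dots)$, $\bigvee^-$ of countably infinite arity, and $a\le b$ means $a\wedge b=a$. $\mathcal{V}_{\sigma\ell\mathbb{G}}$: $\ell$-group axioms plus (A1)–(A3) in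 the language $0,+,-,\vee,\wedge,\bigvee^-$. $\mathcal{V}_{\sigma\mathbb{RS}}$: Riesz space axioms plus (A1)–(A3) in the Riesz space language (including scalar multiplications $\lambda\cdot-$, $\lambda\in\mathbb{R}$) plus $\bigvee^-$. $\mathcal{V}_{\sigma\ell\mathbb{G}_u}$ and $\mathcal{V}_{\sigma\mathbb{RS}_u}$: the same with an additional constant $1$ and the additional axiom $\bigvee_{n\ge1}^{|f|}(|f|\wedge n1)=|f|$. *)

(* Defs.v *)
From Stdlib Require Import Reals Lra.
Open Scope R_scope.

Inductive lang : Type := L_lG | L_lGu | L_RS | L_RSu.

Definition has_one (L : lang) : bool :=
  match L with L_lGu | L_RSu => true | _ => false end.
Definition has_scal (L : lang) : bool :=
  match L with L_RS | L_RSu => true | _ => false end.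

(** Terms over the countable set of variables [nat].  [TSupm s] is
    [\/^-(s 0, s 1, s 2, ...)], i.e. [\/^-(g, f_1, f_2, ...)] with
    [g = s 0] and [f_n = s n]. *)
Inductive term : Type :=
| TVar  : nat -> term
| TZero : term
| TOne  : term
| TAdd  : term -> term -> term
| TOpp  : term -> term
| TJoin : term -> term -> term
| TMeet : term -> term -> term
| TScal : R -> term -> term
| TSupm : (nat -> term) -> term.

Fixpoint in_lang (L : lang) (t : term) : Prop :=
  match t with
  | TVar _ => True
  | TZero => True
  | TOne => has_one L = true
  | TAdd a b => in_lang L a /\ in_lang L b
  | TOpp a => in_lang L a
  | TJoin a b => in_lang L a /\ in_lang L b
  | TMeet a b => in_lang L a /\ in_lang L b
  | TScal _ a => has_scal L = true /\ in_lang L a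
  | TSupm s => forall n, in_lang L (s n)
  end.

(** * Structures (with all symbols of the largest language; symbols not in
    the language under consideration are simply unconstrained/unused). *)
Record structure : Type := Struct {
  car  :> Type;
  zero : car;
  one  : car;
  add  : car -> car -> car;
  opp  : car -> car;
  join : car -> car -> car;
  meet : car -> car -> car;
  scal : R -> car -> car;
  supm : (nat -> car) -> car
}.

Fixpoint eval (A : structure) (v : nat -> A) (t : term) : A :=
  match t with
  | TVar i => v i
  | TZero => zero A
  | TOne => one A
  | TAdd a b => add A (eval A v a) (eval A v b)
  | TOpp a => opp A (eval A v a)
  | TJoin a b => join A (eval A v a) (eval A v b)
  | TMeet a b => meet A (eval A v a) (eval A v b)
  | TScal r a => scal A r (eval A v a)
  | TSupm s => supm A (fun n => eval A v (s n))
  end.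

Definition qe_holds (A : structure) (prem : nat -> term * term) (t1 t2 : term)
  : Prop :=
  forall v : nat -> A,
    (forall n, eval A v (fst (prem n)) = eval A v (snd (prem n))) ->
    eval A v t1 = eval A v t2.

Definition le (A : structure) (a b : A) : Prop := meet A a b = a.

(** [scons g f] is the sequence [g, f 0, f 1, ...]; thus
    [supm A (scons g f)] is [\/^g_{n>=1} f_n] with [f_n = f (n-1)]. *)
Definition scons {T : Type} (g : T) (f : nat -> T) (n : nat) : T :=
  match n with O => g | S k => f k end.

Definition lgroup_axioms (A : structure) : Prop :=
  (forall x y z, add A x (add A y z) = add A (add A x y) z) /\
  (forall x y, add A x y = add A y x) /\
  (forall x, add A x (zero A) = x) /\
  (forall x, add A x (opp A x) = zero A) /\
  (forall x y z, join A x (join A y z) = join A (join A x y) z) /\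
  (forall x y, join A x y = join A y x) /\
  (forall x y z, meet A x (meet A y z) = meet A (meet A x y) z) /\
  (forall x y, meet A x y = meet A y x) /\
  (forall x y, join A x (meet A x y) = x) /\
  (forall x y, meet A x (join A x y) = x) /\
  (forall x y z, add A x (join A y z) = join A (add A x y) (add A x z)).

Definition riesz_axioms (A : structure) : Prop :=
  (forall (a : R) x y, scal A a (add A x y) = add A (scal A a x) (scal A a y)) /\
  (forall (a b : R) x, scal A (a + b) x = add A (scal A a x) (scal A b x)) /\
  (forall (a b : R) x, scal A (a * b) x = scal A a (scal A b x)) /\
  (forall x, scal A 1 x = x) /\
  (forall (a : R) x y, 0 <= a -> le A x y -> le A (scal A a x) (scal A a y)).

Definition sigma_axioms (A : structure) : Prop :=
  (forall (g : A) (f : nat -> A),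
      supm A (scons g f) = supm A (scons g (fun n => meet A (f n) g))) /\
  (forall (g : A) (f : nat -> A),
      supm A (scons g f) =
      join A (meet A (f 0%nat) g) (supm A (scons g (fun n => f (S n))))) /\
  (forall (g h : A) (f : nat -> A),
      le A (supm A (scons g (fun n => meet A (f n) h))) h).

Definition absv (A : structure) (x : A) : A := join A x (opp A x).

Fixpoint nmul (A : structure) (n : nat) (x : A) : A :=
  match n with O => zero A | S k => add A (nmul A k x) x end.

Definition unit_axiom (A : structure) : Prop :=
  forall f : A,
    supm A (scons (absv A f) (fun k => meet A (absv A f) (nmul A (S k) (one A))))
    = absv A f.

Definition in_variety (L : lang) (A : structure) : Prop :=
  lgroup_axioms A /\ sigma_axioms A /\
  (has_scal L = true -> riesz_axioms A) /\
  (has_one L = true -> unit_axiom A).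

Definition Rsupm_set (s : nat -> R) (x : R) : Prop :=
  exists n : nat, x = Rmin (s (S n)) (s O).

Lemma Rsupm_bound (s : nat -> R) : bound (Rsupm_set s).
Proof.
  exists (s O); intros x [n ->]; apply Rmin_r.
Qed.

Lemma Rsupm_nonempty (s : nat -> R) : exists x, Rsupm_set s x.
Proof. exists (Rmin (s 1%nat) (s O)); exists O; reflexivity. Qed.

Definition Rsupm (s : nat -> R) : R :=
  proj1_sig (completeness (Rsupm_set s) (Rsupm_bound s) (Rsupm_nonempty s)).

Definition Rstruct : structure :=
  {| car := R; zero := 0; one := 1; add := Rplus; opp := Ropp;
     join := Rmax; meet := Rmin; scal := Rmult; supm := Rsupm |}.

(* Main.v *)
Require Import Defs.
From Stdlib Require Import Reals Lra Lia FunctionalExtensionality ZArith ClassicalEpsilon Classical Cantor.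


Fixpoint sub (t : term) (n : nat) : term :=
  match n with
  | O => t
  | S n' =>
    let (i, j) := Cantor.of_nat n' in
    match t with
    | TAdd a b | TJoin a b | TMeet a b => if Nat.eqb i 0 then sub a j else sub b j
    | TOpp a | TScal _ a => sub a j
    | TSupm s => sub (s i) j
    | _ => t
    end
  end.

Lemma sub_S t n : sub t (S n) = let (i, j) := Cantor.of_nat n in
    match t with
    | TAdd a b | TJoin a b | TMeet a b => if Nat.eqb i 0%nat then sub a j else sub b j
    | TOpp a | TScal _ a => sub a j
    | TSupm s => sub (s i) j
    | _ => t
    end.
Proof. destruct t; reflexivity. Qed.

Lemma sub_0 t : sub t 0 = t. Proof. destruct t; reflexivity. Qed.

Definition child (c t : term) : Prop :=
  match t with
  | TAdd a b | TJoin a b | TMeet a b => c = a \/ c = b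
  | TOpp a | TScal _ a => c = a
  | TSupm s => exists i, c = s i
  | _ => False
  end.

Lemma sub_child_top t c : child c t -> forall j, exists n, sub t n = sub c j.
Proof. intros H j. destruct t; simpl in H; try contradiction.
  - destruct H as [->| ->].
    + exists (S (Cantor.to_nat (0%nat, j))). rewrite sub_S, Cantor.cancel_of_to. reflexivity.
    + exists (S (Cantor.to_nat (1%nat, j))). rewrite sub_S, Cantor.cancel_of_to. reflexivity.
  - subst. exists (S (Cantor.to_nat (0%nat, j))). rewrite sub_S, Cantor.cancel_of_to. reflexivity.
  - destruct H as [->| ->].
    + exists (S (Cantor.to_nat (0%nat, j))). rewrite sub_S, Cantor.cancel_of_to. reflexivity.
    + exists (S (Cantor.to_nat (1%nat, j))). rewrite sub_S, Cantor.cancel_of_to. reflexivity.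
  - destruct H as [->| ->].
    + exists (S (Cantor.to_nat (0%nat, j))). rewrite sub_S, Cantor.cancel_of_to. reflexivity.
    + exists (S (Cantor.to_nat (1%nat, j))). rewrite sub_S, Cantor.cancel_of_to. reflexivity.
  - subst. exists (S (Cantor.to_nat (0%nat, j))). rewrite sub_S, Cantor.cancel_of_to. reflexivity.
  - destruct H as [i ->]. exists (S (Cantor.to_nat (i, j))). rewrite sub_S, Cantor.cancel_of_to. reflexivity.
Qed.

Lemma sub_closed t : forall n c, child c (sub t n) -> exists n', sub t n' = c.
Proof. induction t; intros n0 c Hc; (destruct n0 as [|n0];
  [rewrite sub_0 in Hc; destruct (sub_child_top _ _ Hc 0) as [n' Hn']; exists n'; rewrite Hn', sub_0; reflexivity|]);
  rewrite sub_S in Hc; destruct (Cantor.of_nat n0) as [i j] eqn:E; simpl in Hc; try contradiction.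
  - destruct (Nat.eqb i 0%nat).
    + destruct (IHt1 j c Hc) as [n' H']. exists (S (Cantor.to_nat (0%nat, n'))). rewrite sub_S, Cantor.cancel_of_to. auto.
    + destruct (IHt2 j c Hc) as [n' H']. exists (S (Cantor.to_nat (1%nat, n'))). rewrite sub_S, Cantor.cancel_of_to. auto.
  - destruct (IHt j c Hc) as [n' H']. exists (S (Cantor.to_nat (0%nat, n'))). rewrite sub_S, Cantor.cancel_of_to. auto.
  - destruct (Nat.eqb i 0%nat).
    + destruct (IHt1 j c Hc) as [n' H']. exists (S (Cantor.to_nat (0%nat, n'))). rewrite sub_S, Cantor.cancel_of_to. auto.
    + destruct (IHt2 j c Hc) as [n' H']. exists (S (Cantor.to_nat (1%nat, n'))). rewrite sub_S, Cantor.cancel_of_to. auto.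
  - destruct (Nat.eqb i 0%nat).
    + destruct (IHt1 j c Hc) as [n' H']. exists (S (Cantor.to_nat (0%nat, n'))). rewrite sub_S, Cantor.cancel_of_to. auto.
    + destruct (IHt2 j c Hc) as [n' H']. exists (S (Cantor.to_nat (1%nat, n'))). rewrite sub_S, Cantor.cancel_of_to. auto.
  - destruct (IHt j c Hc) as [n' H']. exists (S (Cantor.to_nat (0%nat, n'))). rewrite sub_S, Cantor.cancel_of_to. auto.
  - destruct (H i j c Hc) as [n' H']. exists (S (Cantor.to_nat (i, n'))). rewrite sub_S, Cantor.cancel_of_to. auto.
Qed.

Open Scope R_scope.

Definition qv (m : Z) (k : nat) : R := IZR m / INR (S k).

Lemma INR_S_pos k : 0 < INR (S k).
Proof. apply lt_0_INR. lia. Qed.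
Lemma INR_IZR_S k : INR (S k) = IZR (Z.of_nat (S k)).
Proof. apply INR_IZR_INZ. Qed.

Lemma qle m k m' k' : qv m k <= qv m' k' <-> (m * Z.of_nat (S k') <= m' * Z.of_nat (S k))%Z.
Proof. unfold qv. pose proof (INR_S_pos k). pose proof (INR_S_pos k').
  rewrite (INR_IZR_S k), (INR_IZR_S k') in *.
  set (a := Z.of_nat (S k)) in *. set (b := Z.of_nat (S k')) in *.
  split; intro H1.
  - apply le_IZR. rewrite !mult_IZR.
    apply (Rmult_le_compat_r (IZR a * IZR b)) in H1; [|nra].
    replace (IZR m / IZR a * (IZR a * IZR b)) with (IZR m * IZR b) in H1 by (field; lra).
    replace (IZR m' / IZR b * (IZR a * IZR b)) with (IZR m' * IZR a) in H1 by (field; lra).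
    exact H1.
  - apply IZR_le in H1. rewrite !mult_IZR in H1.
    apply (Rmult_le_reg_r (IZR a * IZR b)); [nra|].
    replace (IZR m / IZR a * (IZR a * IZR b)) with (IZR m * IZR b) by (field; lra).
    replace (IZR m' / IZR b * (IZR a * IZR b)) with (IZR m' * IZR a) by (field; lra).
    exact H1. Qed.

Lemma qlt m k m' k' : qv m k < qv m' k' <-> (m * Z.of_nat (S k') < m' * Z.of_nat (S k))%Z.
Proof. split; intro H.
  - destruct (Z_lt_le_dec (m * Z.of_nat (S k')) (m' * Z.of_nat (S k))); auto.
    apply qle in l. lra.
  - destruct (Rlt_le_dec (qv m k) (qv m' k')); auto. apply qle in r. lia. Qed.

Lemma density a b : a < b -> exists m k, a < qv m k < b.
Proof. intro H.
  destruct (archimed (/ (b - a))) as [H1 _].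
  set (n := up (/ (b - a))) in *.
  assert (Hn : (0 < n)%Z).
  { apply lt_IZR. assert (0 < / (b - a)) by (apply Rinv_0_lt_compat; lra). lra. }
  exists (up (a * IZR n)), (Z.to_nat n - 1)%nat.
  unfold qv. replace (INR (S (Z.to_nat n - 1))) with (IZR n).
  2:{ rewrite INR_IZR_INZ. f_equal. lia. }
  destruct (archimed (a * IZR n)) as [H2 H3].
  assert (Hp : 0 < IZR n) by (apply IZR_lt; lia).
  split.
  - apply (Rmult_lt_reg_r (IZR n)); auto. field_simplify; lra.
  - apply (Rmult_lt_reg_r (IZR n)); auto. unfold Rdiv. rewrite Rmult_assoc, Rinv_l by lra.
    rewrite Rmult_1_r.
    assert (b * IZR n - a * IZR n > 1).
    { assert (IZR n * (b - a) > 1).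
      { apply (Rmult_lt_reg_r (/ (b - a))). apply Rinv_0_lt_compat; lra.
        rewrite Rmult_assoc, Rinv_r by lra. lra. }
      lra. }
    lra. Qed.

Section LG.
Variable A : structure.
Hypothesis HA : lgroup_axioms A.

Local Notation "x ⊕ y" := (add A x y) (at level 50, left associativity).
Local Notation "⊖ x" := (opp A x) (at level 35, right associativity).
Local Notation "x ⊔ y" := (join A x y) (at level 40, left associativity).
Local Notation "x ⊓ y" := (meet A x y) (at level 40, left associativity).
Local Notation "x ≤ y" := (le A x y) (at level 70).
Local Notation z := (zero A).

Lemma addA x y w : x ⊕ (y ⊕ w) = x ⊕ y ⊕ w. Proof. apply HA. Qed.
Lemma addC x y : x ⊕ y = y ⊕ x. Proof. apply HA. Qed.
Lemma add0r x : x ⊕ z = x. Proof. apply HA. Qed.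
Lemma addNr x : x ⊕ ⊖ x = z. Proof. apply HA. Qed.
Lemma joinA x y w : x ⊔ (y ⊔ w) = x ⊔ y ⊔ w. Proof. apply HA. Qed.
Lemma joinC x y : x ⊔ y = y ⊔ x. Proof. apply HA. Qed.
Lemma meetA x y w : x ⊓ (y ⊓ w) = x ⊓ y ⊓ w. Proof. apply HA. Qed.
Lemma meetC x y : x ⊓ y = y ⊓ x. Proof. apply HA. Qed.
Lemma joinK x y : x ⊔ (x ⊓ y) = x. Proof. apply HA. Qed.
Lemma meetK x y : x ⊓ (x ⊔ y) = x. Proof. apply HA. Qed.
Lemma addJ x y w : x ⊕ (y ⊔ w) = (x ⊕ y) ⊔ (x ⊕ w). Proof. apply HA. Qed.

Lemma add0l x : z ⊕ x = x. Proof. rewrite addC; apply add0r. Qed.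
Lemma addrN x : ⊖ x ⊕ x = z. Proof. rewrite addC; apply addNr. Qed.
Lemma addKr x y : ⊖ x ⊕ (x ⊕ y) = y.
Proof. rewrite addA, addrN, add0l; reflexivity. Qed.
Lemma addrK x y : x ⊕ y ⊕ ⊖ y = x.
Proof. rewrite <- addA, addNr, add0r; reflexivity. Qed.
Lemma addrKA x y : x ⊕ ⊖ y ⊕ y = x.
Proof. rewrite <- addA, addrN, add0r; reflexivity. Qed.
Lemma addIr w x y : x ⊕ w = y ⊕ w -> x = y.
Proof. intro H. rewrite <- (addrK x w), <- (addrK y w), H; reflexivity. Qed.
Lemma addI w x y : w ⊕ x = w ⊕ y -> x = y.
Proof. rewrite (addC w x), (addC w y). apply addIr. Qed.
Lemma opp_uniq x y : x ⊕ y = z -> y = ⊖ x.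
Proof. intro H. apply (addI x). rewrite H, addNr; reflexivity. Qed.
Lemma oppK x : ⊖ ⊖ x = x.
Proof. symmetry. apply opp_uniq. apply addrN. Qed.
Lemma oppD x y : ⊖ (x ⊕ y) = ⊖ x ⊕ ⊖ y.
Proof. symmetry; apply opp_uniq.
  rewrite (addC (⊖ x) (⊖ y)), addA, <- (addA x y), addNr, add0r, addNr. reflexivity. Qed.
Lemma opp0 : ⊖ z = z.
Proof. symmetry; apply opp_uniq; apply add0r. Qed.
Lemma addCA x y w : x ⊕ (y ⊕ w) = y ⊕ (x ⊕ w).
Proof. rewrite !addA, (addC x y); reflexivity. Qed.
Lemma addAC x y w : x ⊕ y ⊕ w = x ⊕ w ⊕ y.
Proof. rewrite <- !addA, (addC y w); reflexivity. Qed.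
Lemma addACA x y u w : x ⊕ y ⊕ (u ⊕ w) = x ⊕ u ⊕ (y ⊕ w).
Proof. rewrite !addA, (addAC x y u). reflexivity. Qed.

Lemma joinxx x : x ⊔ x = x.
Proof. rewrite <- (meetK x x) at 2. apply joinK. Qed.
Lemma meetxx x : x ⊓ x = x.
Proof. rewrite <- (joinK x x) at 2. apply meetK. Qed.
Lemma le_join x y : x ≤ y <-> x ⊔ y = y.
Proof. unfold le; split; intro H.
  - rewrite <- H, meetC, joinC, joinK. reflexivity.
  - rewrite <- H. apply meetK. Qed.
Lemma le_refl x : x ≤ x. Proof. apply meetxx. Qed.
Lemma le_anti x y : x ≤ y -> y ≤ x -> x = y.
Proof. unfold le; intros H1 H2. transitivity (x ⊓ y); [symmetry; exact H1| rewrite meetC; exact H2]. Qed.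
Lemma le_trans x y w : x ≤ y -> y ≤ w -> x ≤ w.
Proof. unfold le; intros H1 H2. rewrite <- H1, <- meetA, H2. reflexivity. Qed.
Lemma meet_l x y : x ⊓ y ≤ x.
Proof. unfold le. rewrite (meetC x y), <- meetA, meetxx. reflexivity. Qed.
Lemma meet_r x y : x ⊓ y ≤ y.
Proof. rewrite meetC; apply meet_l. Qed.
Lemma meet_glb x y w : w ≤ x -> w ≤ y -> w ≤ x ⊓ y.
Proof. unfold le; intros H1 H2. rewrite meetA, H1, H2. reflexivity. Qed.
Lemma join_l x y : x ≤ x ⊔ y.
Proof. apply meetK. Qed.
Lemma join_r x y : y ≤ x ⊔ y.
Proof. rewrite joinC; apply join_l. Qed.
Lemma join_lub x y w : x ≤ w -> y ≤ w -> x ⊔ y ≤ w.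
Proof. rewrite !le_join; intros H1 H2. rewrite <- joinA, H2, H1. reflexivity. Qed.
Lemma meet_mono x y u w : x ≤ u -> y ≤ w -> x ⊓ y ≤ u ⊓ w.
Proof. intros; apply meet_glb; [eapply le_trans; [apply meet_l|eauto]|eapply le_trans; [apply meet_r|eauto]]. Qed.
Lemma join_mono x y u w : x ≤ u -> y ≤ w -> x ⊔ y ≤ u ⊔ w.
Proof. intros; apply join_lub; [eapply le_trans; [eauto|apply join_l]|eapply le_trans; [eauto|apply join_r]]. Qed.
Lemma le_meet_eq x y : x ≤ y -> x ⊓ y = x. Proof. auto. Qed.
Lemma le_join_eq x y : x ≤ y -> x ⊔ y = y. Proof. apply le_join. Qed.

Lemma add_le_l w x y : x ≤ y -> w ⊕ x ≤ w ⊕ y.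
Proof. rewrite !le_join; intro H. rewrite <- addJ, H. reflexivity. Qed.
Lemma add_le_r w x y : x ≤ y -> x ⊕ w ≤ y ⊕ w.
Proof. rewrite (addC x w), (addC y w). apply add_le_l. Qed.
Lemma add_le x y u w : x ≤ u -> y ≤ w -> x ⊕ y ≤ u ⊕ w.
Proof. intros; eapply le_trans; [apply add_le_r; eauto| apply add_le_l; eauto]. Qed.
Lemma add_le_l_inv w x y : w ⊕ x ≤ w ⊕ y -> x ≤ y.
Proof. intro H. apply (add_le_l (⊖ w)) in H. rewrite !addKr in H. exact H. Qed.
Lemma opp_le x y : x ≤ y -> ⊖ y ≤ ⊖ x.
Proof. intro H. apply (add_le_l (⊖ x ⊕ ⊖ y)) in H.
  replace (⊖ x ⊕ ⊖ y ⊕ x) with (⊖ y) in H.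
  2:{ rewrite (addC (⊖ x)), <- addA, addrN, add0r. reflexivity. }
  replace (⊖ x ⊕ ⊖ y ⊕ y) with (⊖ x) in H.
  2:{ rewrite <- addA, addrN, add0r. reflexivity. }
  exact H. Qed.
Lemma opp_le_iff x y : ⊖ y ≤ ⊖ x <-> x ≤ y.
Proof. split; [intro H; apply opp_le in H; rewrite !oppK in H; exact H | apply opp_le]. Qed.
Lemma addM x y w : x ⊕ (y ⊓ w) = (x ⊕ y) ⊓ (x ⊕ w).
Proof. apply le_anti.
  - apply meet_glb; apply add_le_l; [apply meet_l| apply meet_r].
  - apply (add_le_l_inv (⊖ x)). rewrite addKr. apply meet_glb.
    + rewrite <- (addKr x y) at 2. apply add_le_l, meet_l.
    + rewrite <- (addKr x w) at 2. apply add_le_l, meet_r. Qed.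
Lemma oppJ x y : ⊖ (x ⊔ y) = ⊖ x ⊓ ⊖ y.
Proof. apply le_anti.
  - apply meet_glb; apply opp_le; [apply join_l|apply join_r].
  - rewrite <- opp_le_iff, oppK. apply join_lub; rewrite <- opp_le_iff, oppK; [apply meet_l|apply meet_r]. Qed.
Lemma oppM x y : ⊖ (x ⊓ y) = ⊖ x ⊔ ⊖ y.
Proof. rewrite <- (oppK x), <- (oppK y) at 1. rewrite <- oppJ, oppK. reflexivity. Qed.
Lemma addJM x y : x ⊕ y = (x ⊔ y) ⊕ (x ⊓ y).
Proof. apply (addIr (⊖ (x ⊔ y))). rewrite (addC (x ⊔ y)), addrK.
  rewrite oppJ, addM, (addC x y) at 1. rewrite addrK, <- addA, addNr, add0r, meetC. reflexivity. Qed.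
Lemma addM_r x y w : (y ⊓ w) ⊕ x = (y ⊕ x) ⊓ (w ⊕ x).
Proof. rewrite !(addC _ x). apply addM. Qed.
Lemma addJ_r x y w : (y ⊔ w) ⊕ x = (y ⊕ x) ⊔ (w ⊕ x).
Proof. rewrite !(addC _ x). apply addJ. Qed.
Lemma le_sub0 x y : x ≤ y <-> x ⊕ ⊖ y ≤ z.
Proof. split; intro H.
  - rewrite <- (addNr y). apply add_le_r; auto.
  - apply (add_le_r y) in H. rewrite addrKA, add0l in H; auto. Qed.
Lemma le_0sub x y : x ≤ y <-> z ≤ y ⊕ ⊖ x.
Proof. split; intro H.
  - rewrite <- (addNr x). apply add_le_r; auto.
  - apply (add_le_r x) in H. rewrite addrKA, add0l in H; auto. Qed.


Definition pos x := x ⊔ z.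
Definition negp x := ⊖ x ⊔ z.

Lemma pos_ge0 x : z ≤ pos x. Proof. apply join_r. Qed.
Lemma neg_ge0 x : z ≤ negp x. Proof. apply join_r. Qed.
Lemma le_pos x : x ≤ pos x. Proof. apply join_l. Qed.
Lemma pos_mono x y : x ≤ y -> pos x ≤ pos y.
Proof. intro; apply join_mono; auto using le_refl. Qed.
Lemma pos_of_ge0 x : z ≤ x -> pos x = x.
Proof. intro H. unfold pos. rewrite joinC. apply le_join. auto. Qed.
Lemma pos_of_le0 x : x ≤ z -> pos x = z.
Proof. intro H. unfold pos. apply le_join. auto. Qed.
Lemma pos_neg x : x = pos x ⊕ ⊖ negp x.
Proof. unfold pos, negp. rewrite oppJ, oppK, opp0, <- addJM, add0r. reflexivity. Qed.
Lemma negp_pos x : negp x = pos (⊖ x). Proof. reflexivity. Qed.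
Lemma pos_negp_disj x : pos x ⊓ negp x = z.
Proof. unfold negp.
  assert (E : ⊖ x ⊔ z = pos x ⊕ ⊖ x).
  { unfold pos. rewrite addJ_r, addNr, add0l, joinC. reflexivity. }
  rewrite E. rewrite <- (add0r (pos x)) at 1. rewrite <- addM.
  replace (z ⊓ (⊖ x)) with (⊖ (pos x)).
  - apply addNr.
  - unfold pos. rewrite oppJ, opp0, meetC. reflexivity. Qed.

Lemma ge0_add x y : z ≤ x -> z ≤ y -> z ≤ x ⊕ y.
Proof. intros; rewrite <- (add0r z). apply add_le; auto. Qed.
Lemma ge0_meet x y : z ≤ x -> z ≤ y -> z ≤ x ⊓ y.
Proof. apply meet_glb. Qed.
Lemma le_add_ge0 x y : z ≤ y -> x ≤ x ⊕ y.
Proof. intro H. rewrite <- (add0r x) at 1. apply add_le_l; auto. Qed.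
Lemma le_add_ge0' x y : z ≤ y -> x ≤ y ⊕ x.
Proof. rewrite addC. apply le_add_ge0. Qed.

Lemma le_sub_add x y w : x ⊕ ⊖ y ≤ w -> x ≤ w ⊕ y.
Proof. intro H. apply (add_le_r y) in H. rewrite addrKA in H. exact H. Qed.
Lemma le_add_sub x y w : x ≤ w ⊕ y -> x ⊕ ⊖ y ≤ w.
Proof. intro H. apply (add_le_r (⊖ y)) in H. rewrite addrK in H. exact H. Qed.
Lemma le_addr_sub x y w : x ⊕ y ≤ w <-> x ≤ w ⊕ ⊖ y.
Proof. split; intro H.
  - apply (add_le_r (⊖ y)) in H. rewrite addrK in H; exact H.
  - apply (add_le_r y) in H. rewrite addrKA in H; exact H. Qed.
Lemma le_subr x y : z ≤ y -> x ⊕ ⊖ y ≤ x.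
Proof. intro H. apply le_add_sub. apply le_add_ge0; auto. Qed.

Lemma meet_add_le a b c : z ≤ a -> z ≤ b -> z ≤ c -> a ⊓ (b ⊕ c) ≤ (a ⊓ b) ⊕ (a ⊓ c).
Proof. intros Ha Hb Hc. rewrite (addC (a ⊓ b)). apply le_sub_add.
  rewrite oppM, addJ. apply join_lub.
  - apply (le_trans _ z); [apply (proj1 (le_sub0 _ _)), meet_l| apply ge0_meet; auto].
  - rewrite addM_r. rewrite (addC b c), <- addA, addNr, add0r.
    apply meet_mono; [apply le_subr; auto | apply le_refl]. Qed.

Definition disj a b := a ⊓ b = z.
Lemma disj_sym a b : disj a b -> disj b a.
Proof. unfold disj; rewrite meetC; auto. Qed.
Lemma disj_add a b c : z ≤ a -> z ≤ b -> z ≤ c -> disj a b -> disj a c -> disj a (b ⊕ c).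
Proof. unfold disj; intros Ha Hb Hc H1 H2. apply le_anti.
  - eapply le_trans; [apply meet_add_le; auto|]. rewrite H1, H2, add0r. apply le_refl.
  - apply ge0_meet; auto using ge0_add. Qed.
Lemma disj_le a b c : z ≤ a -> z ≤ c -> c ≤ b -> disj a b -> disj a c.
Proof. unfold disj; intros Ha Hc Hcb H. apply le_anti.
  - rewrite <- H. apply meet_mono; auto using le_refl.
  - apply ge0_meet; auto. Qed.
Lemma disj_le2 a b a' b' : z ≤ a' -> z ≤ b' -> a' ≤ a -> b' ≤ b -> disj a b -> disj a' b'.
Proof. unfold disj; intros Ha Hb H1 H2 H. apply le_anti.
  - rewrite <- H. apply meet_mono; auto.
  - apply ge0_meet; auto. Qed.

Local Notation nm := (nmul A).
Lemma nmul0 x : nm 0 x = z. Proof. reflexivity. Qed.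
Lemma nmulS n x : nm (S n) x = nm n x ⊕ x. Proof. reflexivity. Qed.
Lemma nmul1 x : nm 1 x = x. Proof. simpl. apply add0l. Qed.
Lemma nmul_plus m n x : nm (m + n) x = nm m x ⊕ nm n x.
Proof. induction n; simpl. - rewrite Nat.add_0_r, add0r; auto.
  - rewrite Nat.add_succ_r. simpl. rewrite IHn, addA. reflexivity. Qed.
Lemma nmul_add n x y : nm n (x ⊕ y) = nm n x ⊕ nm n y.
Proof. induction n; simpl. - rewrite add0r; auto.
  - rewrite IHn. apply addACA. Qed.
Lemma nmul_opp n x : nm n (⊖ x) = ⊖ nm n x.
Proof. induction n; simpl. - rewrite opp0; auto.
  - rewrite IHn, oppD. reflexivity. Qed.
Lemma nmul_z n : nm n z = z.
Proof. induction n; simpl; auto. rewrite IHn, add0r; auto. Qed.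
Lemma nmul_mult m n x : nm (m * n) x = nm m (nm n x).
Proof. induction m; simpl; auto. rewrite nmul_plus, IHm, addC. reflexivity. Qed.
Lemma nmul_ge0 n x : z ≤ x -> z ≤ nm n x.
Proof. intro H; induction n; simpl. apply le_refl. apply ge0_add; auto. Qed.
Lemma nmul_le n x y : x ≤ y -> nm n x ≤ nm n y.
Proof. intro H; induction n; simpl. apply le_refl. apply add_le; auto. Qed.
Lemma nmul_le_n m n x : z ≤ x -> (m <= n)%nat -> nm m x ≤ nm n x.
Proof. intros H Hmn. replace n with (m + (n - m))%nat by lia. rewrite nmul_plus.
  apply le_add_ge0, nmul_ge0; auto. Qed.
Lemma le_nmul n x : z ≤ x -> (1 <= n)%nat -> x ≤ nm n x.
Proof. intros. rewrite <- (nmul1 x) at 1. apply nmul_le_n; auto. Qed.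
Lemma nmul_sub n x y : nm n (x ⊕ ⊖ y) = nm n x ⊕ ⊖ nm n y.
Proof. rewrite nmul_add, nmul_opp. reflexivity. Qed.

Lemma disj_nmul_r n a b : z ≤ a -> z ≤ b -> disj a b -> disj a (nm n b).
Proof. intros Ha Hb H; induction n; simpl.
  - unfold disj. apply le_anti; [apply meet_r| apply ge0_meet; auto using le_refl].
  - apply disj_add; auto using nmul_ge0. Qed.
Lemma disj_nmul m n a b : z ≤ a -> z ≤ b -> disj a b -> disj (nm m a) (nm n b).
Proof. intros. apply disj_nmul_r; auto using nmul_ge0. apply disj_sym, disj_nmul_r; auto. apply disj_sym; auto. Qed.

Lemma join_sum p q : p ⊔ q = p ⊕ q ⊕ ⊖ (p ⊓ q).
Proof. rewrite (addJM p q), addrK. reflexivity. Qed.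

Lemma pos_uniq x p q : z ≤ p -> z ≤ q -> disj p q -> x = p ⊕ ⊖ q -> pos x = p.
Proof. intros Hp Hq Hd ->. unfold pos.
  rewrite <- (addNr q). rewrite <- addJ_r, join_sum, Hd, opp0, add0r, addrK. reflexivity. Qed.
Lemma pos_nmul n x : pos (nm n x) = nm n (pos x).
Proof. apply (pos_uniq _ _ (nm n (negp x))); auto using nmul_ge0, pos_ge0, neg_ge0.
  - apply disj_nmul; auto using pos_ge0, neg_ge0. apply pos_negp_disj.
  - rewrite <- nmul_sub, <- pos_neg. reflexivity. Qed.
Lemma negp_nmul n x : negp (nm n x) = nm n (negp x).
Proof. rewrite !negp_pos, <- nmul_opp. apply pos_nmul. Qed.
Lemma join_pos a b : a ⊔ b = b ⊕ pos (a ⊕ ⊖ b).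
Proof. unfold pos. rewrite addJ, addCA, addNr, !add0r. reflexivity. Qed.
Lemma nmul_join n a b : nm n (a ⊔ b) = nm n a ⊔ nm n b.
Proof. rewrite !join_pos, nmul_add, <- pos_nmul, nmul_sub. reflexivity. Qed.
Lemma nmul_meet n a b : nm n (a ⊓ b) = nm n a ⊓ nm n b.
Proof. rewrite <- (oppK (a ⊓ b)), oppM, nmul_opp, nmul_join, oppJ, !nmul_opp, !oppK. reflexivity. Qed.
Lemma pos_add_le x y : pos (x ⊕ y) ≤ pos x ⊕ pos y.
Proof. apply join_lub. apply add_le; apply le_pos. apply ge0_add; apply pos_ge0. Qed.
Lemma pos_le_add x y : pos x ≤ pos (x ⊕ y) ⊕ negp y.
Proof. apply join_lub.
  - rewrite <- (addrK x y) at 1. apply add_le. apply le_pos. apply le_pos.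
  - apply ge0_add; [apply pos_ge0| apply neg_ge0]. Qed.
Lemma pos_opp_neg x : pos (⊖ x) = negp x. Proof. reflexivity. Qed.
Lemma negp_le_0 x : z ≤ x -> negp x = z.
Proof. intro H. apply pos_of_le0. rewrite <- opp0. apply opp_le. auto. Qed.
Lemma meet_ge0_pos x y : z ≤ x -> z ≤ y -> x ⊓ pos y = x ⊓ y.
Proof. intros. rewrite pos_of_ge0; auto. Qed.


Lemma meet_eq a y : a ⊓ y = a ⊕ y ⊕ ⊖ (a ⊔ y).
Proof. rewrite (addJM a y), (addC (a ⊔ y)), addrK. reflexivity. Qed.
Lemma decomp a y : y = (a ⊓ y) ⊕ (a ⊔ y) ⊕ ⊖ a.
Proof. rewrite (addC (a ⊓ y)), <- addJM, (addC a y), addrK. reflexivity. Qed.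
Lemma meet_distr a y w : a ⊓ (y ⊔ w) = (a ⊓ y) ⊔ (a ⊓ w).
Proof. apply le_anti.
  2:{ apply join_lub; apply meet_mono; auto using le_refl, join_l, join_r. }
  set (u := (a ⊓ y) ⊔ (a ⊓ w)).
  assert (Hy : y ≤ u ⊕ (a ⊔ (y ⊔ w)) ⊕ ⊖ a).
  { rewrite (decomp a y) at 1. apply add_le_r.
    apply add_le; [apply join_l| apply join_mono; auto using le_refl, join_l]. }
  assert (Hw : w ≤ u ⊕ (a ⊔ (y ⊔ w)) ⊕ ⊖ a).
  { rewrite (decomp a w) at 1. apply add_le_r.
    apply add_le; [apply join_r| apply join_mono; auto using le_refl, join_r]. }
  assert (H := join_lub _ _ _ Hy Hw).
  rewrite meet_eq. apply le_add_sub. rewrite addC.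
  apply (add_le_r a) in H. rewrite addrKA in H. exact H. Qed.

Lemma join_distr a y w : a ⊔ (y ⊓ w) = (a ⊔ y) ⊓ (a ⊔ w).
Proof. rewrite <- (oppK (a ⊔ (y ⊓ w))), <- (oppK ((a ⊔ y) ⊓ (a ⊔ w))). f_equal.
  rewrite oppJ, oppM, meet_distr, oppM, !oppJ. reflexivity. Qed.
Lemma pos_meet x y : pos (x ⊓ y) = pos x ⊓ pos y.
Proof. unfold pos. rewrite !(joinC _ z). apply join_distr. Qed.
Lemma pos_join x y : pos (x ⊔ y) = pos x ⊔ pos y.
Proof. unfold pos. rewrite <- joinA, (joinC y), <- (joinxx z) at 1.
  rewrite <- joinA, joinA, (joinC z y). reflexivity. Qed.
Lemma le_join_add p q : z ≤ p -> z ≤ q -> p ⊔ q ≤ p ⊕ q.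
Proof. intros. apply join_lub; [apply le_add_ge0| apply le_add_ge0']; auto. Qed.
Lemma pos_sub_meet x e : pos (x ⊕ ⊖ e) = x ⊕ ⊖ (x ⊓ e).
Proof. unfold pos. rewrite oppM, addJ, addNr, joinC. reflexivity. Qed.
Lemma opp_sub x y : ⊖ (x ⊕ ⊖ y) = y ⊕ ⊖ x.
Proof. rewrite oppD, oppK, addC. reflexivity. Qed.
Lemma negp_sub x y : negp (x ⊕ ⊖ y) = pos (y ⊕ ⊖ x).
Proof. rewrite negp_pos, opp_sub. reflexivity. Qed.

Hypothesis HS : sigma_axioms A.
Local Notation sm := (supm A).

Definition is_sup (y : nat -> A) (s : A) :=
  (forall n, y n ≤ s) /\ (forall h, (forall n, y n ≤ h) -> s ≤ h).


Lemma sup_ub g f n : f n ⊓ g ≤ sm (scons g f).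
Proof. revert f; induction n; intro f.
  - destruct HS as [_ [H2 _]]. rewrite H2. apply join_l.
  - destruct HS as [_ [H2 _]]. rewrite H2. eapply le_trans; [apply (IHn (fun n => f (S n)))|]. apply join_r. Qed.
Lemma sup_least g f h : (forall n, f n ⊓ g ≤ h) -> sm (scons g f) ≤ h.
Proof. intro H. destruct HS as [H1 [_ H3]]. rewrite H1.
  replace (fun n => f n ⊓ g) with (fun n => (f n ⊓ g) ⊓ h).
  - apply H3.
  - apply functional_extensionality; intro n. apply H. Qed.
Lemma supm_is_sup g f : is_sup (fun n => f n ⊓ g) (sm (scons g f)).
Proof. split; [apply sup_ub| intros; apply sup_least; auto]. Qed.
Lemma supm_is_sup_le g y : (forall n, y n ≤ g) -> is_sup y (sm (scons g y)).
Proof. intro H. destruct (supm_is_sup g y) as [H1 H2]. split.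
  - intro n. specialize (H1 n). rewrite (le_meet_eq _ _ (H n)) in H1. auto.
  - intros h Hh. apply H2. intro n. rewrite (le_meet_eq _ _ (H n)). auto. Qed.
Lemma supm_scons s : sm s = sm (scons (s 0%nat) (fun n => s (S n))).
Proof. f_equal. apply functional_extensionality; intros [|n]; reflexivity. Qed.
Lemma is_sup_uniq y s s' : is_sup y s -> is_sup y s' -> s = s'.
Proof. intros [H1 H2] [H3 H4]. apply le_anti; auto. Qed.
Lemma is_sup_meet a y s : is_sup y s -> is_sup (fun n => a ⊓ y n) (a ⊓ s).
Proof. intros [H1 H2]. split.
  - intro n. apply meet_mono; auto using le_refl.
  - intros u Hu.
    assert (Hs : s ≤ u ⊕ (a ⊔ s) ⊕ ⊖ a).
    { apply H2. intro n. rewrite (decomp a (y n)). apply add_le_r.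
      apply add_le; [apply Hu| apply join_mono; auto using le_refl]. }
    rewrite meet_eq. apply le_add_sub. rewrite addC.
    apply (add_le_r a) in Hs. rewrite addrKA in Hs. exact Hs. Qed.
Lemma is_sup_add c y s : is_sup y s -> is_sup (fun n => y n ⊕ c) (s ⊕ c).
Proof. intros [H1 H2]. split.
  - intro n. apply add_le_r; auto.
  - intros h Hh. apply le_addr_sub, H2. intro n. apply le_addr_sub; auto. Qed.

Lemma archimedean d x : z ≤ d -> (forall n, nm n d ≤ x) -> d = z.
Proof. intros Hd Hn.
  set (y := fun n => nm n d).
  destruct (supm_is_sup_le x y Hn) as [H1 H2]. set (s := sm (scons x y)) in *.
  assert (H : s ≤ s ⊕ ⊖ d).
  { apply H2. intro n. apply (proj1 (le_addr_sub _ _ _)). apply (H1 (S n)). }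
  apply le_anti; auto. apply (proj2 (le_addr_sub _ _ _)) in H.
  rewrite <- (add0r s) in H at 2. apply add_le_l_inv in H. exact H. Qed.

Lemma decr_le (zs : nat -> A) : (forall N, zs (S N) ≤ zs N) -> forall N L, (N <= L)%nat -> zs L ≤ zs N.
Proof. intros H N L HL. induction HL. apply le_refl. eapply le_trans; eauto. Qed.

Lemma lemK (c : A) (zs : nat -> A) k :
  (forall N, zs (S N) ≤ zs N) -> (forall b, (forall N, b ≤ zs N) -> b ≤ z) ->
  (forall N, c ≤ nm k (zs N)) -> c ≤ z.
Proof. intros Hdec Hinf. induction k; intro Hc.
  - apply (Hc 0%nat).
  - apply IHk. intro N. apply (proj2 (le_sub0 _ _)).
    apply Hinf. intro M. apply le_add_sub. rewrite addC.
    apply (le_trans _ _ _ (Hc (Nat.max N M))). simpl.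
    apply add_le. apply nmul_le, decr_le; auto; lia. apply decr_le; auto; lia. Qed.


Variable e : A.
Hypothesis He : z ≤ e.

Definition Bc w := sm (scons e (fun n => nm n (pos w))).

Lemma Bc_sup w : is_sup (fun n => nm n (pos w) ⊓ e) (Bc w).
Proof. apply supm_is_sup. Qed.
Lemma Bc_ge0 w : z ≤ Bc w.
Proof. destruct (Bc_sup w) as [H _]. specialize (H 0%nat). simpl in H.
  rewrite (le_meet_eq _ _ He) in H. exact H. Qed.
Lemma Bc_le_e w : Bc w ≤ e.
Proof. apply (proj2 (Bc_sup w)). intro; apply meet_r. Qed.
Lemma Bc_ub w n : nm n (pos w) ⊓ e ≤ Bc w.
Proof. apply (proj1 (Bc_sup w)). Qed.

Lemma meet_le_z a b : z ≤ a -> z ≤ b -> a ⊓ b ≤ z -> disj a b.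
Proof. intros. apply le_anti; auto. apply ge0_meet; auto. Qed.

Lemma F1a d w : z ≤ d -> disj d (pos w) -> disj d (Bc w).
Proof. intros Hd H. apply meet_le_z; auto using Bc_ge0.
  apply (proj2 (is_sup_meet d _ _ (Bc_sup w))). intro n.
  eapply le_trans; [apply meet_mono; [apply le_refl| apply meet_l]|].
  rewrite (disj_nmul_r n d (pos w)); auto using pos_ge0. apply le_refl. Qed.
Lemma F1b d w : z ≤ d -> d ≤ e -> disj d (Bc w) -> disj d (pos w).
Proof. intros Hd Hde H. apply meet_le_z; auto using pos_ge0.
  rewrite <- H. rewrite <- (le_meet_eq _ _ Hde) at 1. rewrite <- meetA, (meetC e).
  apply meet_mono; [apply le_refl|]. rewrite <- (nmul1 (pos w)). apply Bc_ub. Qed.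
Lemma Bc_disj_neg w : disj (Bc w) (negp w).
Proof. apply disj_sym, F1a. apply neg_ge0. apply disj_sym, pos_negp_disj. Qed.

Lemma nmul_comm m n x : nm m (nm n x) = nm n (nm m x).
Proof. rewrite <- !nmul_mult, Nat.mul_comm. reflexivity. Qed.

Lemma Bc_comp w : disj (Bc w) (e ⊕ ⊖ Bc w).
Proof. set (b := Bc w). set (p := pos w). set (c := e ⊕ ⊖ b).
  assert (Hc : z ≤ c). { unfold c. apply (proj1 (le_0sub _ _)), Bc_le_e. }
  assert (Hp : z ≤ p) by apply pos_ge0.
  assert (Hb : z ≤ b) by apply Bc_ge0.
  apply disj_sym. apply meet_le_z; [exact Hc| exact Hb|].
  apply (proj2 (is_sup_meet c _ _ (Bc_sup w))). intro n.
  eapply le_trans; [apply meet_mono; [apply le_refl| apply meet_l]|].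
  fold p. set (h := c ⊓ nm n p).
  assert (Hh : z ≤ h) by (apply ge0_meet; auto using nmul_ge0).
  assert (HJ : forall j, c ≤ pos (e ⊕ ⊖ nm j p)).
  { intro j. unfold c. rewrite pos_sub_meet. apply add_le_l, opp_le.
    rewrite meetC. apply Bc_ub. }
  rewrite (archimedean h (nm n e)); [apply le_refl| auto |].
  intro j. set (J := nm j p).
  assert (HJ0 : z ≤ J) by (apply nmul_ge0; auto).
  assert (Hd : disj h (pos (J ⊕ ⊖ e))).
  { apply disj_sym. apply (disj_le2 (pos (J ⊕ ⊖ e)) (negp (J ⊕ ⊖ e))); auto using pos_ge0, le_refl.
    rewrite negp_sub. eapply le_trans; [apply meet_l| apply HJ]. apply pos_negp_disj. }
  assert (Hd2 : disj (nm j h) (nm n (pos (J ⊕ ⊖ e)))) by (apply disj_nmul; auto using pos_ge0).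
  assert (Hle : nm j h ≤ nm n J).
  { unfold J. rewrite nmul_comm. apply nmul_le, meet_r. }
  assert (HJd : J = (J ⊓ e) ⊕ pos (J ⊕ ⊖ e)).
  { rewrite pos_sub_meet, addCA, addNr, add0r. reflexivity. }
  rewrite HJd, nmul_add in Hle.
  rewrite <- (le_meet_eq _ _ Hle).
  eapply le_trans; [apply meet_add_le; auto using nmul_ge0, pos_ge0, ge0_meet|].
  rewrite Hd2, add0r. eapply le_trans; [apply meet_r|]. apply nmul_le, meet_r. Qed.

Lemma Bc_mono_gen w w' N : pos w ≤ nm N (pos w') -> Bc w ≤ Bc w'.
Proof. intro H. apply (proj2 (Bc_sup w)). intro n.
  eapply le_trans; [|apply (Bc_ub w' (n * N))]. apply meet_mono; [|apply le_refl].
  rewrite nmul_mult. apply nmul_le; auto. Qed.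

Lemma Bc_meet w w' : Bc w ⊓ Bc w' ≤ Bc (w ⊓ w').
Proof. rewrite meetC. apply (proj2 (is_sup_meet _ _ _ (Bc_sup w))). intro n.
  rewrite meetC. apply (proj2 (is_sup_meet _ _ _ (Bc_sup w'))). intro m.
  eapply le_trans; [|apply (Bc_ub _ (Nat.max n m))].
  rewrite pos_meet, nmul_meet. apply meet_glb; [apply meet_glb|].
  - eapply le_trans; [apply meet_l|]. eapply le_trans; [apply meet_l|]. apply nmul_le_n; auto using pos_ge0; lia.
  - eapply le_trans; [apply meet_r|]. eapply le_trans; [apply meet_l|]. apply nmul_le_n; auto using pos_ge0; lia.
  - eapply le_trans; [apply meet_l|]. apply meet_r. Qed.

Lemma le_of_disj_compl a b : z ≤ a -> a ≤ e -> z ≤ b -> b ≤ e -> disj a (e ⊕ ⊖ b) -> a ≤ b.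
Proof. intros Ha Hae Hb Hbe H.
  rewrite <- (le_meet_eq _ _ Hae). assert (E : e = b ⊕ (e ⊕ ⊖ b)) by (rewrite addCA, addNr, add0r; reflexivity).
  rewrite E at 1. eapply le_trans; [apply meet_add_le; auto; apply (proj1 (le_0sub _ _)); auto|].
  rewrite H, add0r. apply meet_r. Qed.
Lemma disj_of_le_compl a w : z ≤ a -> a ≤ e ⊕ ⊖ Bc w -> disj a (Bc w).
Proof. intros Ha H. apply disj_sym. apply (disj_le2 (Bc w) (e ⊕ ⊖ Bc w)); auto using Bc_ge0, le_refl, Bc_comp. Qed.


Definition zm (m : Z) x := nm (Z.to_nat m) x ⊕ ⊖ nm (Z.to_nat (- m)) x.

Lemma sub_eq a b c d : a ⊕ d = c ⊕ b -> a ⊕ ⊖ b = c ⊕ ⊖ d.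
Proof. intro H. rewrite <- (addrK a d), H, addAC, addrK. reflexivity. Qed.
Lemma sub_add_sub a b c d : (a ⊕ ⊖ b) ⊕ (c ⊕ ⊖ d) = (a ⊕ c) ⊕ ⊖ (b ⊕ d).
Proof. rewrite oppD, addACA. reflexivity. Qed.

Lemma zm_spec m x p q : (Z.of_nat p - Z.of_nat q)%Z = m -> zm m x = nm p x ⊕ ⊖ nm q x.
Proof. intro H. unfold zm. apply sub_eq. rewrite <- !nmul_plus. f_equal. lia. Qed.
Lemma zm_nat n x : zm (Z.of_nat n) x = nm n x.
Proof. rewrite (zm_spec _ _ n 0); [|lia]. simpl. rewrite opp0, add0r. reflexivity. Qed.
Lemma zm_nm a m x : nm a (zm m x) = zm (Z.of_nat a * m) x.
Proof. unfold zm at 1. rewrite nmul_sub, <- !nmul_mult. symmetry. apply zm_spec. lia. Qed.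
Lemma zm_le m m' x : z ≤ x -> (m <= m')%Z -> zm m x ≤ zm m' x.
Proof. intros Hx H. unfold zm at 1. rewrite (zm_spec m' x (Z.to_nat m + Z.to_nat (m' - m)) (Z.to_nat (- m))); [|lia].
  rewrite nmul_plus. rewrite addAC. apply le_add_ge0. apply nmul_ge0; auto. Qed.
Lemma zm_add m1 m2 x : zm (m1 + m2) x = zm m1 x ⊕ zm m2 x.
Proof. unfold zm at 2 3. rewrite sub_add_sub, <- !nmul_plus. apply zm_spec. lia. Qed.
Lemma zm_opp m x : zm (- m) x = ⊖ zm m x.
Proof. unfold zm at 2. rewrite opp_sub. apply zm_spec. lia. Qed.

Definition lin K x m := nm K x ⊕ ⊖ zm m e.
Lemma lin_nm a K x m : nm a (lin K x m) = lin (a * K) x (Z.of_nat a * m).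
Proof. unfold lin. rewrite nmul_sub, nmul_mult, zm_nm. reflexivity. Qed.
Lemma lin_le K x m m' : (m' <= m)%Z -> lin K x m ≤ lin K x m'.
Proof. intro H. apply add_le_l, opp_le, zm_le; auto. Qed.
Lemma lin_add K x y m1 m2 : lin K x m1 ⊕ lin K y m2 = lin K (x ⊕ y) (m1 + m2).
Proof. unfold lin. rewrite sub_add_sub, nmul_add, zm_add. reflexivity. Qed.
Lemma lin_meet K x y m : lin K (x ⊓ y) m = lin K x m ⊓ lin K y m.
Proof. unfold lin. rewrite nmul_meet, addM_r. reflexivity. Qed.
Lemma lin_join K x y m : lin K (x ⊔ y) m = lin K x m ⊔ lin K y m.
Proof. unfold lin. rewrite nmul_join, addJ_r. reflexivity. Qed.
Lemma lin_mono K x y m : x ≤ y -> lin K x m ≤ lin K y m.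
Proof. intro; apply add_le_r, nmul_le; auto. Qed.

Definition T x (m : Z) (k : nat) := Bc (lin (S k) x m).

Lemma T_ge0 x m k : z ≤ T x m k. Proof. apply Bc_ge0. Qed.
Lemma T_le_e x m k : T x m k ≤ e. Proof. apply Bc_le_e. Qed.

Lemma pos_le_nm a w : (1 <= a)%nat -> pos w ≤ nm a (pos w).
Proof. intro; apply le_nmul; auto using pos_ge0. Qed.

Lemma T_mono_thr x m k m' k' :
  (m' * Z.of_nat (S k) <= m * Z.of_nat (S k'))%Z -> T x m k ≤ T x m' k'.
Proof. intro H. unfold T. apply (Bc_mono_gen _ _ (S k)).
  eapply le_trans; [apply (pos_le_nm (S k')); lia|].
  rewrite <- !pos_nmul. apply pos_mono. rewrite !lin_nm.
  replace (S k * S k')%nat with (S k' * S k)%nat by lia.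
  apply lin_le. lia. Qed.
Lemma T_mono_x x y m k : x ≤ y -> T x m k ≤ T y m k.
Proof. intro H. unfold T. apply (Bc_mono_gen _ _ 1). rewrite nmul1. apply pos_mono, lin_mono; auto. Qed.
Lemma T_meet x y m k : T x m k ⊓ T y m k ≤ T (x ⊓ y) m k.
Proof. unfold T. rewrite lin_meet. apply Bc_meet. Qed.
Lemma T_comp x m k : disj (T x m k) (e ⊕ ⊖ T x m k).
Proof. apply Bc_comp. Qed.

Lemma disj_T_neg d x m k : z ≤ d -> d ≤ T x m k -> disj d (negp (lin (S k) x m)).
Proof. intros Hd H. apply (disj_le2 (T x m k) (negp (lin (S k) x m))); auto using neg_ge0, le_refl.
  apply Bc_disj_neg. Qed.
Lemma disj_T_pos d x m k : z ≤ d -> d ≤ e -> disj d (T x m k) -> disj d (pos (lin (S k) x m)).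
Proof. apply F1b. Qed.
Lemma T_of_disj_pos d x m k : z ≤ d -> disj d (pos (lin (S k) x m)) -> disj d (T x m k).
Proof. apply F1a. Qed.

Lemma disj_nm_inv a d x : (1 <= a)%nat -> z ≤ d -> z ≤ x -> disj d (nm a x) -> disj d x.
Proof. intros. apply (disj_le d (nm a x)); auto. apply le_nmul; auto. Qed.

Lemma le_z_eq d : z ≤ d -> d ≤ z -> d = z. Proof. intros; apply le_anti; auto. Qed.

Lemma d_zero_of d b : z ≤ d -> d ≤ b -> disj d b -> d = z.
Proof. intros Hd Hb H. unfold disj in H. rewrite (le_meet_eq _ _ Hb) in H. exact H. Qed.


Lemma cT_ge0 x m k : z ≤ e ⊕ ⊖ T x m k. Proof. apply (proj1 (le_0sub _ _)), T_le_e. Qed.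
Lemma cT_le_e x m k : e ⊕ ⊖ T x m k ≤ e. Proof. apply le_subr, T_ge0. Qed.
Lemma meet_le_l_trans a b c : a ≤ c -> a ⊓ b ≤ c.
Proof. intro; eapply le_trans; [apply meet_l|]; auto. Qed.
Lemma meet_le_r_trans a b c : b ≤ c -> a ⊓ b ≤ c.
Proof. intro; eapply le_trans; [apply meet_r|]; auto. Qed.

Lemma T_add_lower x y m1 k1 m2 k2 m3 k3 :
  (m3 * Z.of_nat (S k1) * Z.of_nat (S k2) <=
   (m1 * Z.of_nat (S k2) + m2 * Z.of_nat (S k1)) * Z.of_nat (S k3))%Z ->
  disj (T x m1 k1 ⊓ T y m2 k2) (e ⊕ ⊖ T (x ⊕ y) m3 k3).
Proof. intro Hc. unfold disj.
  set (d := T x m1 k1 ⊓ T y m2 k2 ⊓ (e ⊕ ⊖ T (x ⊕ y) m3 k3)).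
  assert (Hd0 : z ≤ d) by (apply ge0_meet; [apply ge0_meet|]; auto using T_ge0, cT_ge0).
  assert (Hd1 : d ≤ T x m1 k1) by (apply meet_le_l_trans, meet_l).
  assert (Hd2 : d ≤ T y m2 k2) by (apply meet_le_l_trans, meet_r).
  assert (Hd3 : d ≤ e ⊕ ⊖ T (x ⊕ y) m3 k3) by apply meet_r.
  assert (Hde : d ≤ e) by (eapply le_trans; [apply Hd1| apply T_le_e]).
  apply (d_zero_of d (T x m1 k1)); auto.
  apply T_of_disj_pos; auto.
  set (K1 := S k1) in *. set (K2 := S k2) in *. set (K3 := S k3) in *.
  set (u1 := lin K1 x m1). set (u2 := lin K2 y m2). set (w3 := lin K3 (x ⊕ y) m3).
  assert (H3 : disj d (pos w3)) by (apply disj_T_pos; auto; apply disj_of_le_compl; auto).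
  assert (H2 : disj d (negp u2)) by (apply disj_T_neg; auto).
  apply (disj_nm_inv (K2 * K3)); auto using pos_ge0; [unfold K2, K3; lia|].
  rewrite <- pos_nmul.
  assert (HUVW : nm (K2 * K3) u1 ⊕ nm (K1 * K3) u2 ≤ nm (K1 * K2) w3).
  { unfold u1, u2, w3. rewrite !lin_nm.
    replace (K2 * K3 * K1)%nat with (K1 * K2 * K3)%nat by lia.
    replace (K1 * K3 * K2)%nat with (K1 * K2 * K3)%nat by lia.
    rewrite (Nat.mul_comm (K1 * K2) K3). replace (K3 * (K1 * K2))%nat with (K1 * K2 * K3)%nat by lia.
    rewrite lin_add. apply lin_le. unfold K1, K2, K3 in *. rewrite !Nat2Z.inj_mul in *. lia. }
  apply (disj_le d (pos (nm (K1 * K2) w3) ⊕ negp (nm (K1 * K3) u2))); auto using pos_ge0.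
  - eapply le_trans; [apply (pos_le_add _ (nm (K1 * K3) u2))|]. apply add_le_r, pos_mono; auto.
  - apply disj_add; auto using pos_ge0, neg_ge0.
    + rewrite pos_nmul. apply disj_nmul_r; auto using pos_ge0.
    + rewrite negp_nmul. apply disj_nmul_r; auto using neg_ge0. Qed.

Lemma T_add_upper x y m1 k1 m2 k2 m3 k3 :
  ((m1 * Z.of_nat (S k2) + m2 * Z.of_nat (S k1)) * Z.of_nat (S k3) <=
   m3 * Z.of_nat (S k1) * Z.of_nat (S k2))%Z ->
  disj ((e ⊕ ⊖ T x m1 k1) ⊓ (e ⊕ ⊖ T y m2 k2)) (T (x ⊕ y) m3 k3).
Proof. intro Hc. unfold disj.
  set (d := (e ⊕ ⊖ T x m1 k1) ⊓ (e ⊕ ⊖ T y m2 k2) ⊓ T (x ⊕ y) m3 k3).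
  assert (Hd0 : z ≤ d) by (apply ge0_meet; [apply ge0_meet|]; auto using T_ge0, cT_ge0).
  assert (Hd1 : d ≤ e ⊕ ⊖ T x m1 k1) by (apply meet_le_l_trans, meet_l).
  assert (Hd2 : d ≤ e ⊕ ⊖ T y m2 k2) by (apply meet_le_l_trans, meet_r).
  assert (Hd3 : d ≤ T (x ⊕ y) m3 k3) by apply meet_r.
  assert (Hde : d ≤ e) by (eapply le_trans; [apply Hd3| apply T_le_e]).
  apply (d_zero_of d (T (x ⊕ y) m3 k3)); auto.
  apply T_of_disj_pos; auto.
  set (K1 := S k1) in *. set (K2 := S k2) in *. set (K3 := S k3) in *.
  set (u1 := lin K1 x m1). set (u2 := lin K2 y m2). set (w3 := lin K3 (x ⊕ y) m3).
  assert (H1 : disj d (pos u1)) by (apply disj_T_pos; auto; apply disj_of_le_compl; auto).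
  assert (H2 : disj d (pos u2)) by (apply disj_T_pos; auto; apply disj_of_le_compl; auto).
  apply (disj_nm_inv (K1 * K2)); auto using pos_ge0; [unfold K1, K2; lia|].
  rewrite <- pos_nmul.
  assert (HUVW : nm (K1 * K2) w3 ≤ nm (K2 * K3) u1 ⊕ nm (K1 * K3) u2).
  { unfold u1, u2, w3. rewrite !lin_nm.
    replace (K2 * K3 * K1)%nat with (K1 * K2 * K3)%nat by lia.
    replace (K1 * K3 * K2)%nat with (K1 * K2 * K3)%nat by lia.
    rewrite (Nat.mul_comm (K1 * K2) K3). replace (K3 * (K1 * K2))%nat with (K1 * K2 * K3)%nat by lia.
    rewrite lin_add. apply lin_le. unfold K1, K2, K3 in *. rewrite !Nat2Z.inj_mul in *. lia. }
  apply (disj_le d (pos (nm (K2 * K3) u1) ⊕ pos (nm (K1 * K3) u2))); [exact Hd0| apply pos_ge0| |].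
  - eapply le_trans; [apply pos_mono; apply HUVW|]. apply pos_add_le.
  - apply disj_add; auto using pos_ge0; rewrite pos_nmul; apply disj_nmul_r; auto using pos_ge0. Qed.

Lemma T_join_upper x y m k :
  disj ((e ⊕ ⊖ T x m k) ⊓ (e ⊕ ⊖ T y m k)) (T (x ⊔ y) m k).
Proof. unfold disj.
  set (d := (e ⊕ ⊖ T x m k) ⊓ (e ⊕ ⊖ T y m k) ⊓ T (x ⊔ y) m k).
  assert (Hd0 : z ≤ d) by (apply ge0_meet; [apply ge0_meet|]; auto using T_ge0, cT_ge0).
  assert (Hd1 : d ≤ e ⊕ ⊖ T x m k) by (apply meet_le_l_trans, meet_l).
  assert (Hd2 : d ≤ e ⊕ ⊖ T y m k) by (apply meet_le_l_trans, meet_r).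
  assert (Hd3 : d ≤ T (x ⊔ y) m k) by apply meet_r.
  assert (Hde : d ≤ e) by (eapply le_trans; [apply Hd3| apply T_le_e]).
  apply (d_zero_of d (T (x ⊔ y) m k)); auto.
  apply T_of_disj_pos; auto.
  assert (H1 : disj d (pos (lin (S k) x m))) by (apply disj_T_pos; auto; apply disj_of_le_compl; auto).
  assert (H2 : disj d (pos (lin (S k) y m))) by (apply disj_T_pos; auto; apply disj_of_le_compl; auto).
  rewrite lin_join, pos_join.
  apply (disj_le d (pos (lin (S k) x m) ⊕ pos (lin (S k) y m))); [exact Hd0| eapply le_trans; [apply pos_ge0| apply join_l]| |].
  - apply le_join_add; apply pos_ge0.
  - apply disj_add; auto using pos_ge0. Qed.


Lemma core d y n : z ≤ d -> d ≤ e -> disj d (pos (nm n e ⊕ ⊖ y)) -> nm n d ≤ pos y.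
Proof. intros Hd Hde H.
  assert (H1 : pos (nm n d ⊕ ⊖ pos y) ≤ pos (nm n e ⊕ ⊖ y)).
  { apply pos_mono, add_le; [apply nmul_le; auto| apply opp_le, le_pos]. }
  assert (H2 : pos (nm n d ⊕ ⊖ pos y) ≤ nm n d).
  { apply join_lub; [apply le_subr, pos_ge0| apply nmul_ge0; auto]. }
  assert (H3 : disj (nm n d) (pos (nm n e ⊕ ⊖ y))).
  { apply disj_sym, disj_nmul_r; auto using pos_ge0. apply disj_sym; auto. }
  apply (proj2 (le_sub0 _ _)). eapply le_trans; [apply le_pos|].
  unfold disj in H3. rewrite <- H3, meetC. apply meet_glb; auto. Qed.

Lemma lin1 x m : lin 1 x m = x ⊕ ⊖ zm m e.
Proof. unfold lin. rewrite nmul1. reflexivity. Qed.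

Lemma C_arch_up d x : z ≤ d -> d ≤ e -> (forall n, d ≤ T x (Z.of_nat n) 0) -> d = z.
Proof. intros Hd Hde H. apply (archimedean d (pos x)); auto. intro n.
  apply core; auto. specialize (H n).
  apply disj_T_neg in H; auto. rewrite lin1, zm_nat, negp_sub in H. exact H. Qed.

Lemma C_arch_lo d x : z ≤ d -> d ≤ e -> (forall n, disj d (T x (- Z.of_nat n) 0)) -> d = z.
Proof. intros Hd Hde H. apply (archimedean d (pos (⊖ x))); auto. intro n.
  apply core; auto. specialize (H n).
  apply disj_T_pos in H; auto. rewrite lin1, zm_opp, zm_nat, oppK, addC in H.
  rewrite oppK. exact H. Qed.

Fixpoint fj (y : nat -> A) (N : nat) : A :=
  match N with O => y O | S N' => fj y N' ⊔ y (S N') end.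

Lemma C_sup d g f m k : z ≤ d -> d ≤ e -> d ≤ T (sm (scons g f)) m k ->
  (forall n, disj d (T (f n ⊓ g) m k)) -> d = z.
Proof. intros Hd Hde Hs H.
  set (s := sm (scons g f)) in *. set (y := fun n => f n ⊓ g).
  set (K := S k).
  assert (Hsup : is_sup y s) by apply supm_is_sup.
  assert (Hy : forall n, disj d (pos (lin K (y n) m))) by (intro n; apply disj_T_pos; auto; exact (H n)).
  assert (HS1 : forall N, disj d (pos (lin K (fj y N) m))).
  { induction N; simpl; auto. rewrite lin_join, pos_join.
    apply (disj_le d (pos (lin K (fj y N) m) ⊕ pos (lin K (y (S N)) m))); [exact Hd| eapply le_trans; [apply pos_ge0| apply join_l]| |].
    - apply le_join_add; apply pos_ge0.
    - apply disj_add; auto using pos_ge0. }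
  assert (Hfs : forall N, fj y N ≤ s).
  { induction N; simpl. apply (proj1 Hsup). apply join_lub; auto. apply (proj1 Hsup). }
  set (zs := fun N => s ⊕ ⊖ fj y N).
  assert (Hz0 : forall N, z ≤ zs N) by (intro N; apply (proj1 (le_0sub _ _)); auto).
  assert (Hdec : forall N, zs (S N) ≤ zs N) by (intro N; apply add_le_l, opp_le; simpl; apply join_l).
  assert (Hyfj : forall n, y n ≤ fj y n) by (intros [|n]; simpl; [apply le_refl| apply join_r]).
  assert (Hinf : forall b, (forall N, b ≤ zs N) -> b ≤ z).
  { intros b Hb. assert (Hs2 : s ≤ s ⊕ ⊖ b).
    { apply (proj2 Hsup). intro n. eapply le_trans; [apply Hyfj|].
      specialize (Hb n). unfold zs in Hb. apply (proj2 (le_addr_sub _ _ _)) in Hb.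
      rewrite addC in Hb. apply (proj1 (le_addr_sub _ _ _)) in Hb. exact Hb. }
    apply (proj2 (le_addr_sub _ _ _)) in Hs2. rewrite <- (add0r s) in Hs2 at 2.
    apply add_le_l_inv in Hs2. exact Hs2. }
  set (c := d ⊓ pos (lin K s m)).
  assert (Hc : c ≤ z).
  { apply (lemK c zs K Hdec Hinf). intro N.
    assert (E : lin K s m = lin K (fj y N) m ⊕ nm K (zs N)).
    { unfold lin, zs. rewrite nmul_sub.
      rewrite (addC (nm K (fj y N) ⊕ ⊖ zm m e)), <- addA, addKr. reflexivity. }
    unfold c. rewrite E. eapply le_trans; [apply meet_mono; [apply le_refl| apply pos_add_le]|].
    rewrite (pos_of_ge0 (nm K (zs N))); [|apply nmul_ge0; auto].
    eapply le_trans; [apply meet_add_le; auto using pos_ge0, nmul_ge0|].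
    rewrite (HS1 N), add0l. apply meet_r. }
  apply (d_zero_of d (T s m k)); auto. apply T_of_disj_pos; auto.
  apply le_anti; auto. apply ge0_meet; auto using pos_ge0. Qed.

Lemma C_pos d cc : z ≤ cc -> z ≤ d -> d ≤ e -> d ≤ Bc cc -> (forall n, disj d (T cc 1 n)) -> d = z.
Proof. intros Hc Hd Hde Hb H.
  assert (Hdc : d ⊓ cc = z).
  { apply (archimedean _ e); auto using ge0_meet. intros [|n].
    - simpl. auto.
    - specialize (H n). apply disj_T_pos in H; auto. unfold lin in H. rewrite (zm_nat 1), nmul1 in H.
      set (N := S n) in *.
      apply (proj2 (le_sub0 _ _)). eapply le_trans; [apply le_pos|].
      assert (H3 : disj (nm N d) (pos (nm N cc ⊕ ⊖ e))) by (apply disj_sym, disj_nmul_r; auto using pos_ge0; apply disj_sym; auto).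
      unfold disj in H3. rewrite <- H3. apply meet_glb.
      + apply join_lub; [eapply le_trans; [apply le_subr; auto| apply nmul_le, meet_l]| apply nmul_ge0; auto].
      + apply pos_mono, add_le_r, nmul_le, meet_r. }
  apply (d_zero_of d (Bc cc)); auto. apply F1a; auto. unfold disj. rewrite pos_of_ge0; auto. Qed.

Lemma Bc_pos0 w : pos w = z -> Bc w = z.
Proof. intro H. apply le_anti; [|apply Bc_ge0]. apply (proj2 (Bc_sup _)). intro n.
  rewrite H, nmul_z. apply meet_l. Qed.
Lemma Bc_zm j : Bc (zm j e) = if (0 <? j)%Z then e else z.
Proof. destruct (0 <? j)%Z eqn:E.
  - apply Z.ltb_lt in E. rewrite (zm_spec j e (Z.to_nat j) 0); [|lia]. simpl. rewrite opp0, add0r.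
    apply le_anti; [apply Bc_le_e|]. eapply le_trans; [|apply (Bc_ub _ 1)].
    rewrite nmul1. rewrite (pos_of_ge0 (nm (Z.to_nat j) e)) by (apply nmul_ge0; auto). apply meet_glb; [apply le_nmul; auto; lia| apply le_refl].
  - apply Z.ltb_ge in E. rewrite (zm_spec j e 0 (Z.to_nat (- j))); [|lia]. simpl. rewrite add0l.
    apply Bc_pos0. apply pos_of_le0. rewrite <- opp0. apply opp_le, nmul_ge0; auto. Qed.

Lemma lin_zm K j m : lin K (zm j e) m = zm (Z.of_nat K * j - m) e.
Proof. unfold lin. rewrite zm_nm, <- zm_opp, <- zm_add. f_equal. Qed.

Lemma T_e m k : T e m k = if (m <? Z.of_nat (S k))%Z then e else z.
Proof. unfold T. assert (E1 : e = zm 1 e) by (rewrite (zm_nat 1), nmul1; reflexivity).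
  rewrite E1 at 1. rewrite lin_zm, Bc_zm.
  destruct (Z.ltb_spec 0 (Z.of_nat (S k) * 1 - m)), (Z.ltb_spec m (Z.of_nat (S k))); try reflexivity; lia. Qed.
Lemma T_z m k : T z m k = if (m <? 0)%Z then e else z.
Proof. unfold T. assert (E0 : z = zm 0 e) by (rewrite (zm_nat 0); reflexivity).
  rewrite E0 at 1.
  rewrite lin_zm, Bc_zm.
  destruct (Z.ltb_spec 0 (Z.of_nat (S k) * 0 - m)), (Z.ltb_spec m 0); try reflexivity; lia. Qed.


Definition goodd d := z ≤ d /\ d ≤ e /\ d <> z.

Section RSik.
Variable F : nat -> nat -> A.
Hypothesis HF0 : forall k n, z ≤ F k n.
Hypothesis HFe : forall k n, F k n ≤ e.
Hypothesis Hcov : forall k d, z ≤ d -> d ≤ e -> (forall n, d ⊓ F k n = z) -> d = z.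
Variable d0 : A.
Hypothesis Hd0 : goodd d0.

Lemma step_ex k (d : {d | goodd d}) : exists n, goodd (proj1_sig d ⊓ F k n).
Proof. destruct d as [d [H1 [H2 H3]]]. simpl.
  apply NNPP. intro Hn. apply H3. apply (Hcov k d); auto. intro n.
  apply NNPP. intro Hne. apply Hn. exists n. split; [|split]; auto.
  - apply ge0_meet; auto.
  - apply meet_le_l_trans; auto. Qed.

Definition step k (d : {d | goodd d}) : {d | goodd d} :=
  let n := proj1_sig (constructive_indefinite_description _ (step_ex k d)) in
  exist _ (proj1_sig d ⊓ F k n) (proj2_sig (constructive_indefinite_description _ (step_ex k d))).

Fixpoint dseq (k : nat) : {d | goodd d} :=
  match k with O => exist _ d0 Hd0 | S k' => step k' (dseq k') end.

Definition UU b := exists k, proj1_sig (dseq k) ≤ b.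

Lemma dseq_dec k : proj1_sig (dseq (S k)) ≤ proj1_sig (dseq k).
Proof. simpl. apply meet_l. Qed.
Lemma UU_mono b b' : UU b -> b ≤ b' -> UU b'.
Proof. intros [k H] H'. exists k. eapply le_trans; eauto. Qed.
Lemma UU_meet b b' : UU b -> UU b' -> UU (b ⊓ b').
Proof. intros [k H] [k' H']. exists (Nat.max k k'). apply meet_glb.
  - eapply le_trans; [apply (decr_le (fun k => proj1_sig (dseq k))); [apply dseq_dec| ]|apply H]. lia.
  - eapply le_trans; [apply (decr_le (fun k => proj1_sig (dseq k))); [apply dseq_dec| ]|apply H']. lia. Qed.
Lemma UU_proper b : UU b -> b ≤ z -> False.
Proof. intros [k H] Hb. destruct (dseq k) as [d [H1 [H2 H3]]]. simpl in H. apply H3.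
  apply le_anti; auto. eapply le_trans; eauto. Qed.
Lemma UU_req k : exists n, UU (F k n).
Proof. exists (proj1_sig (constructive_indefinite_description _ (step_ex k (dseq k)))).
  exists (S k). simpl. apply meet_r. Qed.
Lemma UU_d0 : UU d0.
Proof. exists 0%nat. apply le_refl. Qed.
End RSik.

Section Phi.
Variable U : A -> Prop.
Hypothesis Umono : forall b b', U b -> b ≤ b' -> U b'.
Hypothesis Umeet : forall b b', U b -> U b' -> U (b ⊓ b').
Hypothesis Uprop : forall b, U b -> b ≤ z -> False.
Hypothesis Ue : U e.

Lemma U_disj a b : U a -> U b -> disj a b -> False.
Proof. intros Ha Hb H. apply (Uprop (a ⊓ b)); auto. rewrite H. apply le_refl. Qed.
Lemma U_compl x m k : U (T x m k) -> U (e ⊕ ⊖ T x m k) -> False.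
Proof. intros H1 H2. apply (U_disj _ _ H1 H2). apply T_comp. Qed.
Lemma U_thr x m k m' k' : U (T x m k) -> qv m' k' <= qv m k -> U (T x m' k').
Proof. intros H Hq. apply qle in Hq. eapply Umono; [apply H|]. apply T_mono_thr. lia. Qed.

Definition Sx x (r : R) := exists m k, r = qv m k /\ U (T x m k).
Definition fin x := (exists m k, U (T x m k)) /\ (exists m k, ~ U (T x m k)).

Lemma fin_ub x m0 k0 : ~ U (T x m0 k0) -> is_upper_bound (Sx x) (qv m0 k0).
Proof. intros H r [m [k [-> Hu]]]. destruct (Rle_lt_dec (qv m k) (qv m0 k0)); auto.
  exfalso. apply H. apply (U_thr x m k); auto. lra. Qed.
Lemma fin_bound x : fin x -> bound (Sx x).
Proof. intros [_ [m0 [k0 H]]]. exists (qv m0 k0). apply fin_ub; auto. Qed.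
Lemma fin_ne x : fin x -> exists r, Sx x r.
Proof. intros [[m [k H]] _]. exists (qv m k), m, k. auto. Qed.

Definition phi x : R :=
  match excluded_middle_informative (fin x) with
  | left H => proj1_sig (completeness _ (fin_bound x H) (fin_ne x H))
  | right _ => 0 end.

Lemma phi_lub x : fin x -> is_lub (Sx x) (phi x).
Proof. intro H. unfold phi. destruct (excluded_middle_informative (fin x)) as [H'|H'].
  - apply (proj2_sig (completeness _ (fin_bound x H') (fin_ne x H'))).
  - contradiction. Qed.

Lemma P1 x m k : fin x -> U (T x m k) -> qv m k <= phi x.
Proof. intros Hf H. apply (proj1 (phi_lub x Hf)). exists m, k; auto. Qed.
Lemma P2 x m k : fin x -> qv m k < phi x -> U (T x m k).
Proof. intros Hf H. apply NNPP. intro Hn.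
  assert (Hub : is_upper_bound (Sx x) (qv m k)).
  { intros r [m1 [k1 [-> Hu]]]. destruct (Rle_lt_dec (qv m1 k1) (qv m k)); auto.
    exfalso. apply Hn. apply (U_thr x m1 k1); auto. lra. }
  apply (proj2 (phi_lub x Hf)) in Hub. lra. Qed.
Lemma P3 x b : fin x -> (forall m k, U (T x m k) -> qv m k <= b) -> phi x <= b.
Proof. intros Hf H. apply (proj2 (phi_lub x Hf)). intros r [m [k [-> Hu]]]. auto. Qed.
Lemma P4 x a : fin x -> (forall m k, qv m k < a -> U (T x m k)) -> a <= phi x.
Proof. intros Hf H. destruct (Rle_lt_dec a (phi x)); auto.
  destruct (density _ _ r) as [m [k [H1 H2]]]. specialize (H m k H2).
  apply (P1 x) in H; auto. lra. Qed.

Lemma phi_mono x y : fin x -> fin y -> x ≤ y -> phi x <= phi y.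
Proof. intros Hx Hy H. apply P3; auto. intros m k Hu. apply P1; auto.
  eapply Umono; [apply Hu| apply T_mono_x; auto]. Qed.

Lemma phi_meet x y : fin x -> fin y -> fin (x ⊓ y) -> phi (x ⊓ y) = Rmin (phi x) (phi y).
Proof. intros Hx Hy Hxy. apply Rle_antisym.
  - apply Rmin_glb; apply phi_mono; auto; [apply meet_l| apply meet_r].
  - apply P4; auto. intros m k Hq. eapply Umono; [| apply T_meet].
    apply Umeet; apply P2; auto; eapply Rlt_le_trans; eauto; [apply Rmin_l| apply Rmin_r]. Qed.

Definition decT x := forall m k, U (T x m k) \/ U (e ⊕ ⊖ T x m k).

Lemma notU_compl x m k : decT x -> ~ U (T x m k) -> U (e ⊕ ⊖ T x m k).
Proof. intros H Hn. destruct (H m k); tauto. Qed.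

Lemma phi_join x y : fin x -> fin y -> fin (x ⊔ y) -> decT x -> decT y ->
  phi (x ⊔ y) = Rmax (phi x) (phi y).
Proof. intros Hx Hy Hxy Dx Dy. apply Rle_antisym.
  - apply P3; auto. intros m k Hu.
    destruct (classic (U (T x m k))) as [H1|H1].
    + apply (Rle_trans _ (phi x)); [apply P1; auto| apply Rmax_l].
    + destruct (classic (U (T y m k))) as [H2|H2].
      * apply (Rle_trans _ (phi y)); [apply P1; auto| apply Rmax_r].
      * exfalso. apply notU_compl in H1; auto. apply notU_compl in H2; auto.
        apply (U_disj _ _ (Umeet _ _ H1 H2) Hu). apply T_join_upper.
  - apply Rmax_lub; apply phi_mono; auto; [apply join_l| apply join_r]. Qed.

Lemma phi_add x y : fin x -> fin y -> fin (x ⊕ y) -> decT x -> decT y ->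
  phi (x ⊕ y) = phi x + phi y.
Proof. intros Hx Hy Hxy Dx Dy. apply Rle_antisym.
  - apply P3; auto. intros m3 k3 Hu.
    destruct (Rle_lt_dec (qv m3 k3) (phi x + phi y)) as [|Hlt]; auto. exfalso.
    destruct (density (phi x) (qv m3 k3 - phi y)) as [m1 [k1 [H1 H1']]]; [lra|].
    destruct (density (phi y) (qv m3 k3 - qv m1 k1)) as [m2 [k2 [H2 H2']]]; [lra|].
    assert (N1 : ~ U (T x m1 k1)) by (intro H; apply (P1 x) in H; auto; lra).
    assert (N2 : ~ U (T y m2 k2)) by (intro H; apply (P1 y) in H; auto; lra).
    apply notU_compl in N1; auto. apply notU_compl in N2; auto.
    apply (U_disj _ _ (Umeet _ _ N1 N2) Hu). apply T_add_upper.
    assert (qv m1 k1 + qv m2 k2 <= qv m3 k3) by lra.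
    unfold qv in H. rewrite !INR_IZR_S in H.
    pose proof (INR_S_pos k1). pose proof (INR_S_pos k2). pose proof (INR_S_pos k3).
    rewrite !INR_IZR_S in *.
    apply le_IZR. rewrite !mult_IZR, plus_IZR, !mult_IZR.
    set (a := IZR (Z.of_nat (S k1))) in *. set (b := IZR (Z.of_nat (S k2))) in *.
    set (c := IZR (Z.of_nat (S k3))) in *.
    apply (Rmult_le_compat_r (a * b * c)) in H; [|apply Rlt_le; repeat apply Rmult_lt_0_compat; auto].
    replace ((IZR m1 / a + IZR m2 / b) * (a * b * c)) with ((IZR m1 * b + IZR m2 * a) * c) in H by (field; lra).
    replace (IZR m3 / c * (a * b * c)) with (IZR m3 * a * b) in H by (field; lra).
    exact H.
  - apply P4; auto. intros m3 k3 Hq.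
    destruct (density (qv m3 k3 - phi y) (phi x)) as [m1 [k1 [H1 H1']]]; [lra|].
    destruct (density (qv m3 k3 - qv m1 k1) (phi y)) as [m2 [k2 [H2 H2']]]; [lra|].
    assert (U1 : U (T x m1 k1)) by (apply P2; auto).
    assert (U2 : U (T y m2 k2)) by (apply P2; auto).
    eapply Umono; [apply (Umeet _ _ U1 U2)|].
    apply le_of_disj_compl; auto using T_ge0, T_le_e.
    + apply ge0_meet; apply T_ge0.
    + apply meet_le_l_trans, T_le_e.
    + apply T_add_lower.
      assert (qv m3 k3 <= qv m1 k1 + qv m2 k2) by lra.
      unfold qv in H.
      pose proof (INR_S_pos k1). pose proof (INR_S_pos k2). pose proof (INR_S_pos k3).
      rewrite !INR_IZR_S in *.
      apply le_IZR. rewrite !mult_IZR, plus_IZR, !mult_IZR.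
      set (a := IZR (Z.of_nat (S k1))) in *. set (b := IZR (Z.of_nat (S k2))) in *.
      set (c := IZR (Z.of_nat (S k3))) in *.
      apply (Rmult_le_compat_r (a * b * c)) in H; [|apply Rlt_le; repeat apply Rmult_lt_0_compat; auto].
      replace ((IZR m1 / a + IZR m2 / b) * (a * b * c)) with ((IZR m1 * b + IZR m2 * a) * c) in H by (field; lra).
      replace (IZR m3 / c * (a * b * c)) with (IZR m3 * a * b) in H by (field; lra).
      exact H. Qed.

Lemma qv00 : qv 0 0 = 0. Proof. unfold qv. simpl. lra. Qed.
Lemma qv10 : qv 1 0 = 1. Proof. unfold qv. simpl. lra. Qed.

Lemma fin_z : fin z.
Proof. split.
  - exists (-1)%Z, 0%nat. rewrite T_z. simpl. auto.
  - exists 0%Z, 0%nat. rewrite T_z. simpl. intro H. apply (Uprop z); auto. apply le_refl. Qed.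
Lemma phi_z : phi z = 0.
Proof. apply Rle_antisym.
  - apply P3; [apply fin_z|]. intros m k H. rewrite T_z in H.
    destruct (Z.ltb_spec m 0).
    + rewrite <- qv00. apply qle. lia.
    + exfalso. apply (Uprop z); auto. apply le_refl.
  - apply P4; [apply fin_z|]. intros m k H. rewrite <- qv00 in H. apply qlt in H.
    rewrite T_z. destruct (Z.ltb_spec m 0); auto. lia. Qed.
Lemma fin_e : fin e.
Proof. split.
  - exists 0%Z, 0%nat. rewrite T_e. simpl. auto.
  - exists 1%Z, 0%nat. rewrite T_e. simpl. intro H. apply (Uprop z); auto. apply le_refl. Qed.
Lemma phi_e : phi e = 1.
Proof. apply Rle_antisym.
  - apply P3; [apply fin_e|]. intros m k H. rewrite T_e in H.
    destruct (Z.ltb_spec m (Z.of_nat (S k))).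
    + rewrite <- qv10. apply qle. lia.
    + exfalso. apply (Uprop z); auto. apply le_refl.
  - apply P4; [apply fin_e|]. intros m k H. rewrite <- qv10 in H. apply qlt in H.
    rewrite T_e. destruct (Z.ltb_spec m (Z.of_nat (S k))); auto. lia. Qed.

Lemma phi_opp x : fin x -> fin (⊖ x) -> decT x -> decT (⊖ x) -> phi (⊖ x) = - phi x.
Proof. intros H1 H2 H3 H4. assert (H := phi_add x (⊖ x)). rewrite addNr, phi_z in H.
  assert (0 = phi x + phi (⊖ x)) by (apply H; auto using fin_z). lra. Qed.

Lemma Rsupm_lub (s : nat -> R) : is_lub (Rsupm_set s) (Rsupm s).
Proof. unfold Rsupm. apply (proj2_sig (completeness _ _ _)). Qed.

Lemma phi_sup (ff : nat -> A) : (forall n, fin (ff n)) -> fin (supm A ff) ->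
  (forall m k, U (e ⊕ ⊖ T (supm A ff) m k) \/ exists n, U (T (ff (S n) ⊓ ff 0%nat) m k)) ->
  phi (supm A ff) = Rsupm (fun n => phi (ff n)).
Proof. intros Hf Hs Hreq.
  assert (Hle : forall n, ff (S n) ⊓ ff 0%nat ≤ supm A ff).
  { intro n. rewrite supm_scons. apply (sup_ub (ff 0%nat) (fun n => ff (S n)) n). }
  destruct (Rsupm_lub (fun n => phi (ff n))) as [Hub Hleast].
  apply Rle_antisym.
  - apply P3; auto. intros m k Hu. destruct (Hreq m k) as [Hc|[n Hn]].
    + exfalso. apply (U_compl _ _ _ Hu Hc).
    + apply (Rle_trans _ (Rmin (phi (ff (S n))) (phi (ff 0%nat)))).
      * apply Rmin_glb; apply P1; auto; (eapply Umono; [apply Hn| apply T_mono_x]); [apply meet_l| apply meet_r].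
      * apply Hub. exists n. reflexivity.
  - apply Hleast. intros r [n ->]. apply P4; auto. intros m k Hq.
    eapply Umono; [| apply T_mono_x, (Hle n)]. eapply Umono; [| apply T_meet].
    apply Umeet; apply P2; auto; eapply Rlt_le_trans; eauto; [apply Rmin_l| apply Rmin_r]. Qed.

End Phi.

Section Riesz.
Hypothesis HR : riesz_axioms A.
Local Notation sc := (scal A).

Lemma sc_addv a x y : sc a (x ⊕ y) = sc a x ⊕ sc a y. Proof. apply HR. Qed.
Lemma sc_adds a b x : sc (a + b) x = sc a x ⊕ sc b x. Proof. apply HR. Qed.
Lemma sc_mul a b x : sc (a * b) x = sc a (sc b x). Proof. apply HR. Qed.
Lemma sc_1 x : sc 1 x = x. Proof. apply HR. Qed.
Lemma sc_mono a x y : 0 <= a -> x ≤ y -> sc a x ≤ sc a y. Proof. apply HR. Qed.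

Lemma idem_z w : w ⊕ w = w -> w = z.
Proof. intro H. apply (addI w). rewrite H, add0r. reflexivity. Qed.
Lemma sc_0 x : sc 0 x = z.
Proof. apply idem_z. rewrite <- sc_adds, Rplus_0_r. reflexivity. Qed.
Lemma sc_z a : sc a z = z.
Proof. apply idem_z. rewrite <- sc_addv, add0r. reflexivity. Qed.
Lemma sc_opps a x : sc (- a) x = ⊖ sc a x.
Proof. apply opp_uniq. rewrite <- sc_adds, Rplus_opp_r. apply sc_0. Qed.
Lemma sc_oppv a x : sc a (⊖ x) = ⊖ sc a x.
Proof. apply opp_uniq. rewrite <- sc_addv, addNr. apply sc_z. Qed.
Lemma sc_subs a b x : sc (a - b) x = sc a x ⊕ ⊖ sc b x.
Proof. unfold Rminus. rewrite sc_adds, sc_opps. reflexivity. Qed.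
Lemma sc_nat n x : sc (INR n) x = nm n x.
Proof. induction n. - simpl. apply sc_0.
  - rewrite S_INR, sc_adds, sc_1, IHn. reflexivity. Qed.
Lemma IZR_split j : IZR j = INR (Z.to_nat j) - INR (Z.to_nat (- j)).
Proof. rewrite !INR_IZR_INZ, <- minus_IZR. f_equal. lia. Qed.
Lemma sc_IZR j x : sc (IZR j) x = zm j x.
Proof. rewrite IZR_split, sc_subs, !sc_nat. reflexivity. Qed.
Lemma sc_ge0 a x : 0 <= a -> z ≤ x -> z ≤ sc a x.
Proof. intros. rewrite <- (sc_z a). apply sc_mono; auto. Qed.
Lemma sc_mono_s a b x : a <= b -> z ≤ x -> sc a x ≤ sc b x.
Proof. intros Hab Hx. replace b with (a + (b - a)) by ring. rewrite sc_adds.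
  apply le_add_ge0, sc_ge0; auto. lra. Qed.
Lemma sc_inv a x : a <> 0 -> sc (/ a) (sc a x) = x.
Proof. intro. rewrite <- sc_mul, Rinv_l; auto. apply sc_1. Qed.
Lemma sc_pos a x : 0 <= a -> pos (sc a x) = sc a (pos x).
Proof. intro Ha. destruct (Req_dec a 0) as [->|Hn].
  - rewrite !sc_0. apply pos_of_ge0, le_refl.
  - assert (Ha' : 0 < a) by lra. apply le_anti.
    + unfold pos. apply join_lub. apply sc_mono; auto; apply join_l. apply sc_ge0; auto; apply join_r.
    + set (J := pos (sc a x)).
      assert (H : pos x ≤ sc (/ a) J).
      { unfold pos at 1. apply join_lub.
        - rewrite <- (sc_inv a x Hn) at 1. apply sc_mono. left; apply Rinv_0_lt_compat; auto. apply le_pos.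
        - apply sc_ge0; [left; apply Rinv_0_lt_compat; auto| apply pos_ge0]. }
      apply (sc_mono a) in H; auto. rewrite <- sc_mul, Rinv_r, sc_1 in H; auto. Qed.

Lemma nat_above r : exists N, r <= INR N.
Proof. destruct (archimed r) as [H _]. exists (Z.to_nat (up r)).
  destruct (Z_le_gt_dec (up r) 0).
  - rewrite INR_IZR_INZ. assert (IZR (up r) <= 0) by (apply IZR_le; auto).
    assert (0 <= IZR (Z.of_nat (Z.to_nat (up r)))) by (apply IZR_le; lia). lra.
  - rewrite INR_IZR_INZ, Z2Nat.id by lia. lra. Qed.

Lemma lin_sc K x m : lin K x m = sc (INR K) x ⊕ ⊖ sc (IZR m) e.
Proof. unfold lin. rewrite sc_nat, sc_IZR. reflexivity. Qed.

Lemma T_scal x lam m k m' k' : 0 < lam -> qv m k <= lam * qv m' k' ->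
  T x m' k' ≤ T (sc lam x) m k.
Proof. intros Hl Hq. unfold T.
  set (K := S k) in *. set (K' := S k') in *.
  pose proof (INR_S_pos k) as HK. pose proof (INR_S_pos k') as HK'. fold K K' in HK, HK'.
  set (mu := lam * INR K).
  assert (Hmu : 0 < mu) by (unfold mu; apply Rmult_lt_0_compat; auto).
  assert (Hcmp : sc mu (lin K' x m') ≤ nm K' (lin K (sc lam x) m)).
  { rewrite !lin_sc, <- sc_nat, sc_addv, sc_addv, !sc_oppv, <- !sc_mul.
    match goal with |- _ ≤ sc ?c x ⊕ _ => replace c with (mu * INR K') by (unfold mu; ring) end.
    apply add_le_l, opp_le. apply sc_mono_s; auto.
    unfold qv in Hq. fold K K' in Hq. unfold mu.
    apply (Rmult_le_compat_r (INR K * INR K')) in Hq; [|nra].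
    replace (IZR m / INR K * (INR K * INR K')) with (INR K' * IZR m) in Hq by (field; lra).
    replace (lam * (IZR m' / INR K') * (INR K * INR K')) with (lam * INR K * IZR m') in Hq by (field; lra).
    exact Hq. }
  destruct (nat_above (/ mu * INR K')) as [N HN].
  apply (Bc_mono_gen _ _ N).
  rewrite <- (sc_inv mu (pos (lin K' x m'))) by lra.
  rewrite <- sc_pos by lra.
  eapply le_trans; [apply sc_mono; [left; apply Rinv_0_lt_compat; auto| apply pos_mono, Hcmp]|].
  rewrite pos_nmul, <- sc_nat, <- sc_mul, <- sc_nat. apply sc_mono_s; auto. apply pos_ge0. Qed.

Section PhiR.
Variable U : A -> Prop.
Hypothesis Umono : forall b b', U b -> b ≤ b' -> U b'.
Hypothesis Umeet : forall b b', U b -> U b' -> U (b ⊓ b').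
Hypothesis Uprop : forall b, U b -> b ≤ z -> False.

Lemma phi_scal x lam : 0 < lam -> fin U x -> fin U (sc lam x) -> phi U Umono (sc lam x) = lam * phi U Umono x.
Proof. intros Hl Hx Hy. apply Rle_antisym.
  - apply P3; auto. intros m k Hu.
    assert (H : qv m k / lam <= phi U Umono x).
    { destruct (Rle_lt_dec (qv m k / lam) (phi U Umono x)) as [|Hlt]; auto.
      destruct (density _ _ Hlt) as [m' [k' [H1 H2]]].
      exfalso. assert (U (T x m' k')).
      { eapply Umono; [apply Hu|]. rewrite <- (sc_inv lam x) at 2 by lra.
        apply T_scal. apply Rinv_0_lt_compat; auto.
        left. rewrite Rmult_comm. exact H2. }
      apply (P1 U Umono) in H; auto. lra. }
    apply (Rmult_le_compat_l lam) in H; [|lra].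
    replace (lam * (qv m k / lam)) with (qv m k) in H by (field; lra). exact H.
  - apply P4; auto. intros m k Hq.
    destruct (density (qv m k / lam) (phi U Umono x)) as [m' [k' [H1 H2]]].
    { apply (Rmult_lt_reg_l lam); auto. replace (lam * (qv m k / lam)) with (qv m k) by (field; lra). lra. }
    eapply Umono; [apply (P2 U Umono x m' k'); auto|].
    apply T_scal; auto. apply Rlt_le in H1. apply (Rmult_le_compat_l lam) in H1; [|lra].
    replace (lam * (qv m k / lam)) with (qv m k) in H1 by (field; lra). exact H1. Qed.
End PhiR.
End Riesz.

Section Reqs.
Variable xs : nat -> A.
Variable ss : nat -> nat -> A.
Variable cc : A.
Hypothesis Hcc : z ≤ cc.

Definition fam (a i : nat) (m : Z) (k : nat) : nat -> A :=
  match a with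
  | O => fun n => match n with O => T (xs i) m k | _ => e ⊕ ⊖ T (xs i) m k end
  | 1%nat => fun n => e ⊕ ⊖ T (xs i) (Z.of_nat n) 0
  | 2%nat => fun n => T (xs i) (- Z.of_nat n) 0
  | 3%nat => fun n => match n with O => e ⊕ ⊖ T (supm A (ss i)) m k
                              | S n' => T (ss i (S n') ⊓ ss i 0%nat) m k end
  | _ => fun n => match n with O => e ⊕ ⊖ Bc cc | S n' => T cc 1 n' end
  end.

Definition reqF (r : nat) : nat -> A :=
  let (a, r1) := Cantor.of_nat r in
  let (i, r2) := Cantor.of_nat r1 in
  let (p, r3) := Cantor.of_nat r2 in
  let (q, k) := Cantor.of_nat r3 in
  fam a i (Z.of_nat p - Z.of_nat q)%Z k.

Definition code a i m k := Cantor.to_nat (a, Cantor.to_nat (i, Cantor.to_nat (Z.to_nat m, Cantor.to_nat (Z.to_nat (- m), k)))).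
Lemma reqF_code a i m k : reqF (code a i m k) = fam a i m k.
Proof. unfold reqF, code. rewrite !Cantor.cancel_of_to. f_equal. lia. Qed.

Lemma fam_ge0 a i m k n : z ≤ fam a i m k n.
Proof. destruct a as [|[|[|[|a]]]]; simpl; try destruct n; auto using T_ge0, cT_ge0.
  apply (proj1 (le_0sub _ _)), Bc_le_e. Qed.
Lemma fam_le a i m k n : fam a i m k n ≤ e.
Proof. destruct a as [|[|[|[|a]]]]; simpl; try destruct n; auto using T_le_e, cT_le_e.
  apply le_subr, Bc_ge0. Qed.
Lemma reqF_ge0 r n : z ≤ reqF r n.
Proof. unfold reqF. destruct (Cantor.of_nat r) as [a r1]. destruct (Cantor.of_nat r1) as [i r2].
  destruct (Cantor.of_nat r2) as [p r3]. destruct (Cantor.of_nat r3) as [q k]. apply fam_ge0. Qed.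
Lemma reqF_le r n : reqF r n ≤ e.
Proof. unfold reqF. destruct (Cantor.of_nat r) as [a r1]. destruct (Cantor.of_nat r1) as [i r2].
  destruct (Cantor.of_nat r2) as [p r3]. destruct (Cantor.of_nat r3) as [q k]. apply fam_le. Qed.

Lemma le_of_disj_cT d x m k : z ≤ d -> d ≤ e -> d ⊓ (e ⊕ ⊖ T x m k) = z -> d ≤ T x m k.
Proof. intros. apply le_of_disj_compl; auto using T_ge0, T_le_e. Qed.

Lemma fam_cov a i m k d : z ≤ d -> d ≤ e -> (forall n, d ⊓ fam a i m k n = z) -> d = z.
Proof. intros Hd Hde H. destruct a as [|[|[|[|a]]]]; simpl in H.
  - apply (d_zero_of d (T (xs i) m k)); auto.
    + apply le_of_disj_cT; auto. apply (H 1%nat).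
    + apply (H 0%nat).
  - apply (C_arch_up d (xs i)); auto. intro n. apply le_of_disj_cT; auto.
  - apply (C_arch_lo d (xs i)); auto.
  - apply (C_sup d (ss i 0%nat) (fun n => ss i (S n)) m k); auto.
    + rewrite <- supm_scons. apply le_of_disj_cT; auto. apply (H 0%nat).
    + intro n. apply (H (S n)).
  - apply (C_pos d cc); auto.
    + apply le_of_disj_compl; auto using Bc_ge0, Bc_le_e. apply (H 0%nat).
    + intro n. apply (H (S n)). Qed.
Lemma reqF_cov r d : z ≤ d -> d ≤ e -> (forall n, d ⊓ reqF r n = z) -> d = z.
Proof. unfold reqF. destruct (Cantor.of_nat r) as [a r1]. destruct (Cantor.of_nat r1) as [i r2].
  destruct (Cantor.of_nat r2) as [p r3]. destruct (Cantor.of_nat r3) as [q k]. apply fam_cov. Qed.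

End Reqs.

Section Main.
Variable L : lang.
Variable prem : nat -> term * term.
Variables t1 t2 : term.
Variable v : nat -> A.
Hypothesis Hone : has_one L = true -> e = one A.
Hypothesis Hsc : has_scal L = true -> riesz_axioms A.

Definition Kt := TJoin (TAdd t1 (TOpp t2)) (TOpp (TAdd t1 (TOpp t2))).
Definition base (i : nat) : term :=
  match i with
  | O => t1 | 1%nat => t2 | 2%nat => Kt | 3%nat => TZero
  | S (S (S (S i'))) => let (n, w) := Cantor.of_nat i' in
                        if Nat.eqb w 0%nat then fst (prem n) else snd (prem n)
  end.
Definition negsc (u : term) : term := match u with TScal r a => TScal (- r) a | _ => u end.
Definition tm (idx : nat) : term :=
  let (b, r) := Cantor.of_nat idx in let (i, j) := Cantor.of_nat r in
  if Nat.eqb b 0%nat then sub (base i) j else negsc (sub (base i) j).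
Definition xs (idx : nat) : A := eval A v (tm idx).
Definition ss (idx : nat) : nat -> A :=
  let (i, j) := Cantor.of_nat idx in
  match sub (base i) j with TSupm s => fun n => eval A v (s n) | _ => fun _ => z end.
Definition cc := eval A v Kt.

Definition Rel u := exists i j, sub (base i) j = u.
Lemma Rel_child u c : Rel u -> child c u -> Rel c.
Proof. intros [i [j H]] Hc. rewrite <- H in Hc. destruct (sub_closed _ _ _ Hc) as [n' H'].
  exists i, n'. auto. Qed.
Lemma Rel_xs u : Rel u -> exists idx, xs idx = eval A v u.
Proof. intros [i [j H]]. exists (Cantor.to_nat (0%nat, Cantor.to_nat (i, j))).
  unfold xs, tm. rewrite !Cantor.cancel_of_to. simpl. rewrite H. reflexivity. Qed.
Lemma Rel_neg u : Rel u -> exists idx, xs idx = eval A v (negsc u).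
Proof. intros [i [j H]]. exists (Cantor.to_nat (1%nat, Cantor.to_nat (i, j))).
  unfold xs, tm. rewrite !Cantor.cancel_of_to. simpl. rewrite H. reflexivity. Qed.
Lemma Rel_ss s : Rel (TSupm s) -> exists idx, ss idx = fun n => eval A v (s n).
Proof. intros [i [j H]]. exists (Cantor.to_nat (i, j)).
  unfold ss. rewrite !Cantor.cancel_of_to. rewrite H. reflexivity. Qed.
Lemma Rel_base i : Rel (base i).
Proof. exists i, 0%nat. apply sub_0. Qed.

Section HomU.
Variable U : A -> Prop.
Hypothesis Umono : forall b b', U b -> b ≤ b' -> U b'.
Hypothesis Umeet : forall b b', U b -> U b' -> U (b ⊓ b').
Hypothesis Uprop : forall b, U b -> b ≤ z -> False.
Hypothesis Ue : U e.
Hypothesis Hgood : forall idx, fin U (xs idx) /\ decT U (xs idx).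
Hypothesis Hsup : forall idx m k, U (e ⊕ ⊖ T (supm A (ss idx)) m k) \/
                                 exists n, U (T (ss idx (S n) ⊓ ss idx 0%nat) m k).

Local Notation Phi := (phi U Umono).

Lemma good_rel u : Rel u -> fin U (eval A v u) /\ decT U (eval A v u).
Proof. intro H. destruct (Rel_xs u H) as [idx <-]. apply Hgood. Qed.
Lemma good_neg u : Rel u -> fin U (eval A v (negsc u)) /\ decT U (eval A v (negsc u)).
Proof. intro H. destruct (Rel_neg u H) as [idx <-]. apply Hgood. Qed.

Lemma hom u : Rel u -> in_lang L u ->
  eval Rstruct (fun i => Phi (v i)) u = Phi (eval A v u).
Proof. induction u as [n| | |u1 IHu1 u2 IHu2|u IHu|u1 IHu1 u2 IHu2|u1 IHu1 u2 IHu2|r u IHu|u H]; intros Hr Hl; simpl in Hl.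
  - reflexivity.
  - simpl. symmetry. apply phi_z; auto.
  - simpl. rewrite <- (Hone Hl). symmetry. apply phi_e; auto.
  - assert (Ha : Rel u1) by (apply (Rel_child _ _ Hr); simpl; auto).
    assert (Hb : Rel u2) by (apply (Rel_child _ _ Hr); simpl; auto).
    simpl. rewrite IHu1, IHu2 by tauto.
    destruct (good_rel _ Ha), (good_rel _ Hb), (good_rel _ Hr).
    symmetry. apply phi_add; auto.
  - assert (Ha : Rel u) by (apply (Rel_child _ _ Hr); simpl; auto).
    simpl. rewrite IHu by tauto.
    destruct (good_rel _ Ha), (good_rel _ Hr).
    symmetry. apply phi_opp; auto.
  - assert (Ha : Rel u1) by (apply (Rel_child _ _ Hr); simpl; auto).
    assert (Hb : Rel u2) by (apply (Rel_child _ _ Hr); simpl; auto).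
    simpl. rewrite IHu1, IHu2 by tauto.
    destruct (good_rel _ Ha), (good_rel _ Hb), (good_rel _ Hr).
    symmetry. apply phi_join; auto.
  - assert (Ha : Rel u1) by (apply (Rel_child _ _ Hr); simpl; auto).
    assert (Hb : Rel u2) by (apply (Rel_child _ _ Hr); simpl; auto).
    simpl. rewrite IHu1, IHu2 by tauto.
    destruct (good_rel _ Ha), (good_rel _ Hb), (good_rel _ Hr).
    symmetry. apply phi_meet; auto.
  - destruct Hl as [Hs Hl]. pose proof (Hsc Hs) as HR.
    assert (Ha : Rel u) by (apply (Rel_child _ _ Hr); simpl; auto).
    simpl. rewrite IHu by tauto. simpl in Hr.
    destruct (good_rel _ Ha) as [Fx Dx]. destruct (good_rel _ Hr) as [Fy Dy]. simpl in Fy, Dy.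
    set (x := eval A v u) in *.
    destruct (Rlt_le_dec 0 r) as [Hp|Hn].
    + rewrite phi_scal; auto.
    + destruct (Req_dec r 0) as [->|Hne].
      * rewrite sc_0; auto. rewrite phi_z; auto. ring.
      * destruct (good_neg _ Hr) as [Fn Dn]. simpl in Fn, Dn. fold x in Fn, Dn.
        assert (E : scal A r x = ⊖ scal A (- r) x).
        { rewrite <- sc_opps, Ropp_involutive; auto. }
        rewrite E in Fy, Dy |- *.
        rewrite phi_opp; auto. rewrite phi_scal; auto; [ring| lra].
  - simpl.
    assert (Hc : forall n, Rel (u n)) by (intro n; apply (Rel_child _ _ Hr); simpl; eauto).
    replace (fun n => eval Rstruct (fun i => Phi (v i)) (u n)) with (fun n => Phi (eval A v (u n))).
    2:{ apply functional_extensionality. intro n. symmetry. apply H; auto. }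
    destruct (Rel_ss _ Hr) as [idx Hidx].
    symmetry. apply phi_sup; auto.
    + intro n. apply (good_rel _ (Hc n)).
    + apply (good_rel _ Hr).
    + intros m k. specialize (Hsup idx m k). rewrite Hidx in Hsup. exact Hsup.
Qed.
End HomU.

Lemma base_prem n w : base (S (S (S (S (Cantor.to_nat (n, w)))))) =
  if Nat.eqb w 0%nat then fst (prem n) else snd (prem n).
Proof. unfold base. rewrite Cantor.cancel_of_to. reflexivity. Qed.
Lemma Rel_prem1 n : Rel (fst (prem n)).
Proof. exists (S (S (S (S (Cantor.to_nat (n, 0%nat)))))), 0%nat. rewrite sub_0, base_prem. reflexivity. Qed.
Lemma Rel_prem2 n : Rel (snd (prem n)).
Proof. exists (S (S (S (S (Cantor.to_nat (n, 1%nat)))))), 0%nat. rewrite sub_0, base_prem. reflexivity. Qed.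

Hypothesis Hprem : forall n, in_lang L (fst (prem n)) /\ in_lang L (snd (prem n)).
Hypothesis Ht1 : in_lang L t1.
Hypothesis Ht2 : in_lang L t2.
Hypothesis HRq : qe_holds Rstruct prem t1 t2.
Hypothesis Hpv : forall n, eval A v (fst (prem n)) = eval A v (snd (prem n)).
Hypothesis Hcc0 : z ≤ cc.
Hypothesis Hd0 : Bc cc <> z.

Lemma main_false : False.
Proof.
  set (F := reqF xs ss cc).
  assert (Hd0g : goodd (Bc cc)) by (split; [apply Bc_ge0| split; [apply Bc_le_e| exact Hd0]]).
  set (U := UU F (reqF_ge0 xs ss cc) (reqF_cov xs ss cc Hcc0) (Bc cc) Hd0g).
  assert (Um : forall b b', U b -> b ≤ b' -> U b') by apply UU_mono.
  assert (Umt : forall b b', U b -> U b' -> U (b ⊓ b')) by apply UU_meet.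
  assert (Up : forall b, U b -> b ≤ z -> False) by apply UU_proper.
  assert (Ud0 : U (Bc cc)) by apply UU_d0.
  assert (Ue : U e) by (apply (Um _ _ Ud0), Bc_le_e).
  assert (Hreq : forall r, exists n, U (F r n)) by (intro r; apply UU_req).
  assert (Hgood : forall idx, fin U (xs idx) /\ decT U (xs idx)).
  { intro idx. split; [split|].
    - destruct (Hreq (code 2 idx 0 0)) as [n Hn]. unfold F in Hn. rewrite reqF_code in Hn.
      simpl in Hn. exists (- Z.of_nat n)%Z, 0%nat. exact Hn.
    - destruct (Hreq (code 1 idx 0 0)) as [n Hn]. unfold F in Hn. rewrite reqF_code in Hn.
      simpl in Hn. exists (Z.of_nat n), 0%nat. intro H. apply (U_compl U Umt Up _ _ _ H Hn).
    - intros m k. destruct (Hreq (code 0 idx m k)) as [n Hn]. unfold F in Hn. rewrite reqF_code in Hn.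
      destruct n; simpl in Hn; auto. }
  assert (Hsup : forall idx m k, U (e ⊕ ⊖ T (supm A (ss idx)) m k) \/
                                 exists n, U (T (ss idx (S n) ⊓ ss idx 0%nat) m k)).
  { intros idx m k. destruct (Hreq (code 3 idx m k)) as [n Hn]. unfold F in Hn. rewrite reqF_code in Hn.
    destruct n; simpl in Hn; [left| right; exists n]; auto. }
  assert (HK := hom U Um Umt Up Ue Hgood Hsup Kt (Rel_base 2) (ltac:(simpl; tauto))).
  assert (H1 := hom U Um Umt Up Ue Hgood Hsup t1 (Rel_base 0) Ht1).
  assert (H2 := hom U Um Umt Up Ue Hgood Hsup t2 (Rel_base 1) Ht2).
  assert (Hconc : eval Rstruct (fun i => phi U Um (v i)) t1 = eval Rstruct (fun i => phi U Um (v i)) t2).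
  { apply HRq. intro n. rewrite (hom U Um Umt Up Ue Hgood Hsup _ (Rel_prem1 n) (proj1 (Hprem n))).
    rewrite (hom U Um Umt Up Ue Hgood Hsup _ (Rel_prem2 n) (proj2 (Hprem n))). rewrite Hpv. reflexivity. }
  assert (HK0 : eval Rstruct (fun i => phi U Um (v i)) Kt = 0).
  { unfold Kt. simpl. rewrite Hconc, Rplus_opp_r, Ropp_0, Rmax_left; lra. }
  rewrite HK0 in HK. change (phi U Um (eval A v Kt)) with (phi U Um cc) in HK.
  assert (Fcc : fin U cc) by (unfold cc; destruct (Rel_xs Kt (Rel_base 2)) as [idx <-]; apply Hgood).
  destruct (Hreq (code 4 0 0 0)) as [n Hn]. unfold F in Hn. rewrite reqF_code in Hn.
  destruct n; simpl in Hn.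
  - apply (U_disj U Umt Up _ _ Ud0 Hn). apply Bc_comp.
  - apply (P1 U Um) in Hn; auto. rewrite <- HK in Hn.
    unfold qv in Hn. pose proof (INR_S_pos n). assert (0 < 1 / INR (S n)) by (apply Rdiv_lt_0_compat; lra).
    simpl IZR in Hn. lra. Qed.

End Main.

Lemma meet_z_negp y : z ⊓ y = ⊖ negp y.
Proof. unfold negp. rewrite oppJ, oppK, opp0, meetC. reflexivity. Qed.

Lemma one_ge0 : unit_axiom A -> z ≤ one A.
Proof. intro Hun. specialize (Hun z). unfold absv in Hun. rewrite opp0, joinxx in Hun.
  destruct (supm_is_sup z (fun k => z ⊓ nm (S k) (one A))) as [_ Hl].
  rewrite Hun in Hl.
  assert (H : z ≤ ⊖ negp (one A)).
  { apply Hl. intro n. eapply le_trans; [apply meet_l|]. rewrite meet_z_negp. apply opp_le.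
    rewrite negp_nmul. apply le_nmul; [apply neg_ge0| lia]. }
  assert (Hn : negp (one A) = z).
  { apply le_anti; [|apply neg_ge0]. rewrite <- opp_le_iff, opp0. exact H. }
  rewrite (pos_neg (one A)), Hn, opp0, add0r. apply pos_ge0. Qed.

Lemma absv_ge0 x : z ≤ x ⊔ ⊖ x.
Proof. set (y := x ⊔ ⊖ x).
  assert (H2 : z ≤ nm 2 y).
  { simpl. rewrite add0l. rewrite <- (addNr x). apply add_le; [apply join_l| apply join_r]. }
  assert (Hn : negp y = z).
  { apply le_anti; [|apply neg_ge0]. rewrite <- (negp_le_0 _ H2), negp_nmul. apply le_nmul; [apply neg_ge0| lia]. }
  rewrite (pos_neg y), Hn, opp0, add0r. apply pos_ge0. Qed.
Lemma absv_z x : x ⊔ ⊖ x = z -> x = z.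
Proof. intro H. apply le_anti.
  - rewrite <- H. apply join_l.
  - rewrite <- opp_le_iff, opp0, <- H. apply join_r. Qed.

Lemma Bc_self : Bc e = e.
Proof. assert (E : e = zm 1 e) by (rewrite (zm_nat 1), nmul1; reflexivity).
  rewrite E at 1. rewrite Bc_zm. reflexivity. Qed.

End LG.

Section Unit.
Variable A : structure.
Hypothesis HA : lgroup_axioms A.
Hypothesis HS : sigma_axioms A.
Local Notation "x ⊕ y" := (add A x y) (at level 50, left associativity).
Local Notation "⊖ x" := (opp A x) (at level 35, right associativity).
Local Notation "x ⊔ y" := (join A x y) (at level 40, left associativity).
Local Notation "x ⊓ y" := (meet A x y) (at level 40, left associativity).
Local Notation "x ≤ y" := (le A x y) (at level 70).
Local Notation z := (zero A).

Lemma Bc_unit c : unit_axiom A -> z ≤ c -> c <> z -> Bc A (one A) c <> z.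
Proof. intros Hun Hc Hne HB. apply Hne.
  assert (Ho := one_ge0 A HA HS Hun).
  assert (H1 : disj A c (one A)).
  { apply (meet_le_z A HA); auto. rewrite <- HB.
    eapply (le_trans A HA); [|apply (Bc_ub A HA HS (one A) c 1)].
    rewrite (nmul1 A HA), (pos_of_ge0 A HA); auto. apply (le_refl A HA). }
  specialize (Hun c). unfold absv in Hun.
  assert (Ec : c ⊔ ⊖ c = c).
  { rewrite (joinC A HA). apply (le_join A HA). eapply (le_trans A HA); [|apply Hc].
    rewrite <- (opp0 A HA). apply (opp_le A HA); auto. }
  rewrite Ec in Hun.
  destruct (supm_is_sup A HA HS c (fun k => c ⊓ nmul A (S k) (one A))) as [_ Hl]. rewrite Hun in Hl.
  apply (le_anti A HA); auto. apply Hl. intro n. eapply (le_trans A HA); [apply (meet_l A HA)|].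
  rewrite (disj_nmul_r A HA (S n) c (one A)); auto. apply (le_refl A HA). Qed.
End Unit.

Theorem mainTheorem18 :
  forall (L : lang) (prem : nat -> term * term) (t1 t2 : term),
    (forall n, in_lang L (fst (prem n)) /\ in_lang L (snd (prem n))) ->
    in_lang L t1 -> in_lang L t2 ->
    qe_holds Rstruct prem t1 t2 ->
    forall A : structure, in_variety L A -> qe_holds A prem t1 t2.
Proof.
  intros L prem t1 t2 Hprem Ht1 Ht2 HRq A [HA [HS [Hsc Hun]]] v Hpv.
  apply NNPP. intro Hne.
  set (c := cc A t1 t2 v).
  assert (Hc0 : le A (zero A) c) by apply (absv_ge0 A HA).
  assert (Hcne : c <> zero A).
  { intro H. apply Hne. apply (absv_z A HA) in H.
    apply (addIr A HA (opp A (eval A v t2))). rewrite (addNr A HA). exact H. }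
  destruct (has_one L) eqn:Ho.
  - assert (Hu := Hun eq_refl).
    apply (main_false A HA HS (one A) (one_ge0 A HA HS Hu) L prem t1 t2 v); auto.
    apply Bc_unit; auto.
  - apply (main_false A HA HS c Hc0 L prem t1 t2 v); auto.
    + intro H; rewrite Ho in H; discriminate.
    + change (Bc A c c <> zero A). rewrite (Bc_self A HA HS c Hc0). exact Hcne.
Qed.
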